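(* Let $n\ge2$, $p\in(1,2)\cup(2,\infty)$ and $\gamma<\gamma_{n,p}:=\min\{p+\frac{n}{n-1},\,3+\frac{p-1}{n-1}\}$. Let $\Omega\subset\mathbb{R}^n$ be a domain, $u$ a weak solution of $\operatorname{div}(|Du|^{p-2}Du)=0$ in $\Omega$, $U\Subset\Omega$ a smooth domain, $\varepsilon\in(0,1]$, and let $u^\varepsilon\in W^{1,p}(U)\cap C^0(\overline U)$ be the weak solution of $\operatorname{div}([|Du^\varepsilon|^2+\varepsilon]^{\frac{p-2}2}Du^\varepsilon)=0$ in $U$, $u^\varepsilon=u$ on $\partial U$ (which belongs to $C^\infty(U)$). Then for all $\phi\in C_c^\infty(U)$, $$\int_U\frac{|D^2u^\varepsilon Du^\varepsilon|^2}{|Du^\varepsilon|^2+\varepsilon}[|Du^\varepsilon|^2+\varepsilon]^{\frac{p-\gamma}2}\phi^2\,dx+\int_U(\Delta u^\varepsilon)^2[|Du^\varepsilon|^2+\varepsilon]^{\frac{p-\gamma}2}\phi^2\,dx\le C(n,p,\gamma)\int_U[|Du^\varepsilon|^2+\varepsilon]^{\frac{p-\gamma+2}2}|D\phi|^2\,dx,$$ with $C(n,p,\gamma)$ depending only on $n,p,\gamma$. *)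

(* Defs.v *)
From Stdlib Require Import Reals.
From Coquelicot Require Import Coquelicot.
From mathcomp Require Import ssreflect ssrfun ssrbool eqtype ssrnat seq fintype bigop.

Set Implicit Arguments.
Unset Strict Implicit.

Local Open Scope R_scope.

Definition Pt (n : nat) := 'I_n -> R.

Definition upd (n : nat) (x : Pt n) (i : 'I_n) (t : R) : Pt n :=
  fun j => if j == i then t else x j.

Definition partial (n : nat) (i : 'I_n) (f : Pt n -> R) (x : Pt n) : R :=
  Derive (fun t => f (upd x i t)) (x i).

Fixpoint iter_partial (n : nat) (l : seq 'I_n) (f : Pt n -> R) : Pt n -> R :=
  match l with
  | [::] => f
  | i :: l' => partial i (iter_partial l' f)
  end.

Definition sumR (n : nat) (F : 'I_n -> R) : R := \big[Rplus/0]_(i < n) F i.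

Definition norm2 (n : nat) (v : 'I_n -> R) : R := sumR (fun i => v i * v i).

Definition grad (n : nat) (f : Pt n -> R) (x : Pt n) : 'I_n -> R :=
  fun i => partial i f x.

Definition hess (n : nat) (f : Pt n -> R) (x : Pt n) (i j : 'I_n) : R :=
  partial i (partial j f) x.

Definition laplacian (n : nat) (f : Pt n -> R) (x : Pt n) : R :=
  sumR (fun i => hess f x i i).

Definition hess_grad (n : nat) (f : Pt n -> R) (x : Pt n) : 'I_n -> R :=
  fun i => sumR (fun j => hess f x i j * partial j f x).

Definition near_pt (n : nat) (x y : Pt n) (d : R) : Prop :=
  forall i, Rabs (y i - x i) < d.

Definition open_Rn (n : nat) (U : Pt n -> Prop) : Prop :=
  forall x, U x -> exists d, 0 < d /\ forall y, near_pt x y d -> U y.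

Definition bounded_Rn (n : nat) (U : Pt n -> Prop) : Prop :=
  exists M, forall x, U x -> forall i, Rabs (x i) <= M.

Definition cont_at (n : nat) (f : Pt n -> R) (x : Pt n) : Prop :=
  forall eps, 0 < eps -> exists d, 0 < d /\
    forall y, near_pt x y d -> Rabs (f y - f x) < eps.

Definition smooth_on (n : nat) (U : Pt n -> Prop) (f : Pt n -> R) : Prop :=
  forall (l : seq 'I_n) (x : Pt n), U x ->
    cont_at (iter_partial l f) x /\
    forall i : 'I_n, ex_derive (fun t => iter_partial l f (upd x i t)) (x i).

(* the support of phi is a compact subset of the open set U:
   {phi <> 0} is bounded and stays at (sup-)distance >= d > 0 from the
   complement of U. *)
Definition compact_support_in (n : nat) (U : Pt n -> Prop) (phi : Pt n -> R) : Prop :=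
  exists M d, 0 < d /\ forall x, phi x <> 0 ->
    (forall i, Rabs (x i) <= M) /\ forall y, near_pt x y d -> U y.

Definition test_fun (n : nat) (U : Pt n -> Prop) (phi : Pt n -> R) : Prop :=
  smooth_on (fun _ => True) phi /\ compact_support_in U phi.

Definition ext_pt (k : nat) (y : Pt k) (t : R) : Pt k.+1 :=
  fun j => match unlift ord_max j with Some j' => y j' | None => t end.

Fixpoint box_int (n : nat) (M : R) : (Pt n -> R) -> R :=
  match n return (Pt n -> R) -> R with
  | 0 => fun f => f (fun _ => 0)
  | k.+1 => fun f => RInt (fun t => box_int M (fun y : Pt k => f (ext_pt y t))) (- M) M
  end.

Definition reg_plap_sol (n : nat) (p eps : R) (U : Pt n -> Prop) (v : Pt n -> R) : Prop :=
  forall x, U x ->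
    sumR (fun i => partial i
      (fun y => Rpower (norm2 (grad v y) + eps) ((p - 2) / 2) * partial i v y) x) = 0.

Definition gamma_np (n : nat) (p : R) : R :=
  Rmin (p + INR n / (INR n - 1)) (3 + (p - 1) / (INR n - 1)).

(* Main.v *)
Require Import Defs.
From HB Require Import structures.
From Stdlib Require Import Reals Lra Psatz FunctionalExtensionality Classical ClassicalEpsilon.
From Coquelicot Require Import Coquelicot.
From mathcomp Require Import ssreflect ssrfun ssrbool eqtype ssrnat seq fintype bigop.
Set Warnings "-notation-overridden,-ambiguous-paths".
Set Implicit Arguments. Unset Strict Implicit.
Local Open Scope R_scope.

Lemma Rplus_assoc' : associative Rplus. Proof. move=> *; ring. Qed.
Lemma Rmult_plus_distr_r' : left_distributive Rmult Rplus. Proof. move=> *; ring. Qed.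
Lemma Rmult_plus_distr_l' : right_distributive Rmult Rplus. Proof. move=> *; ring. Qed.
HB.instance Definition _ := Monoid.isComLaw.Build R 0 Rplus Rplus_assoc' Rplus_comm Rplus_0_l.
HB.instance Definition _ := Monoid.isMulLaw.Build R 0 Rmult Rmult_0_l Rmult_0_r.
HB.instance Definition _ := Monoid.isAddLaw.Build R Rmult Rplus Rmult_plus_distr_r' Rmult_plus_distr_l'.
Lemma sumR_plus n (F G : 'I_n -> R) : sumR (fun i => F i + G i) = sumR F + sumR G.
Proof. rewrite /sumR big_split //. Qed.
Lemma sumR_scal n (F : 'I_n -> R) c : sumR (fun i => c * F i) = c * sumR F.
Proof. rewrite /sumR big_distrr //. Qed.

Lemma sumR_ext n (F G : 'I_n -> R) : (forall i, F i = G i) -> sumR F = sumR G.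
Proof. move=> H; rewrite /sumR; apply: eq_bigr => i _; exact: H. Qed.
Lemma sumR_scalr n (F : 'I_n -> R) c : sumR (fun i => F i * c) = sumR F * c.
Proof. rewrite /sumR big_distrl //. Qed.
Lemma sumR_0 n : sumR (fun _ : 'I_n => 0) = 0.
Proof. rewrite /sumR big1 //. Qed.
Lemma sumR_ge0 n (F : 'I_n -> R) : (forall i, 0 <= F i) -> 0 <= sumR F.
Proof. move=> H; rewrite /sumR; apply: (big_ind (fun x => 0 <= x)) => //; [lra| move=> *; lra]. Qed.
Lemma sumR_le n (F G : 'I_n -> R) : (forall i, F i <= G i) -> sumR F <= sumR G.
Proof. move=> H; rewrite /sumR; apply: (big_ind2 (fun x y => x <= y)) => //; [lra| move=> *; lra]. Qed.
Lemma sumR_opp n (F : 'I_n -> R) : sumR (fun i => - F i) = - sumR F.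
Proof. rewrite -(sumR_ext (F := fun i => -1 * F i)); first by rewrite sumR_scal; ring. move=> i; ring. Qed.
Lemma sumR_minus n (F G : 'I_n -> R) : sumR (fun i => F i - G i) = sumR F - sumR G.
Proof. rewrite /Rminus -sumR_opp -sumR_plus //. Qed.
Lemma sumR_swap n (F : 'I_n -> 'I_n -> R) :
  sumR (fun i => sumR (fun j => F i j)) = sumR (fun j => sumR (fun i => F i j)).
Proof. rewrite /sumR; exact: exchange_big. Qed.
Lemma sumR_delta n (F : 'I_n -> R) (i : 'I_n) :
  sumR (fun j => F j * (if i == j then 1 else 0)) = F i.
Proof.
rewrite /sumR (bigD1 i) //= eqxx big1 ?Rmult_1_r ?Rplus_0_r // => j /negbTE.
by rewrite eq_sym => ->; rewrite Rmult_0_r.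
Qed.
Lemma sumR_const1 n : sumR (fun _ : 'I_n => 1) = INR n.
Proof.
rewrite /sumR big_const_ord; elim: n => //= n IH.
rewrite IH. case: n {IH} => /= *; lra.
Qed.

Definition dsum n (F : 'I_n -> 'I_n -> R) := sumR (fun i => sumR (fun j => F i j)).
Lemma dsum_add n (F G : 'I_n -> 'I_n -> R) :
  dsum (fun i j => F i j + G i j) = dsum F + dsum G.
Proof. rewrite /dsum -sumR_plus; apply: sumR_ext => i; exact: sumR_plus. Qed.
Lemma dsum_scal n (F : 'I_n -> 'I_n -> R) c :
  dsum (fun i j => c * F i j) = c * dsum F.
Proof. rewrite /dsum -sumR_scal; apply: sumR_ext => i; exact: sumR_scal. Qed.
Lemma dsum_sep n (a b : 'I_n -> R) : dsum (fun i j => a i * b j) = sumR a * sumR b.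
Proof. rewrite /dsum -sumR_scalr; apply: sumR_ext => i; exact: sumR_scal. Qed.
Lemma dsum_ge0 n (F : 'I_n -> 'I_n -> R) : (forall i j, 0 <= F i j) -> 0 <= dsum F.
Proof. move=> H; apply: sumR_ge0 => i; apply: sumR_ge0 => j; exact: H. Qed.
Lemma dsum_ext n (F G : 'I_n -> 'I_n -> R) : (forall i j, F i j = G i j) -> dsum F = dsum G.
Proof. move=> H; apply: sumR_ext => i; apply: sumR_ext => j; exact: H. Qed.

Lemma CS n (a b : 'I_n -> R) :
  sumR (fun i => a i * b i) * sumR (fun i => a i * b i) <=
  sumR (fun i => a i * a i) * sumR (fun i => b i * b i).
Proof.
have E := dsum_ge0 (F := fun i j => (a i * b j - a j * b i) ^ 2) (fun i j => pow2_ge_0 _).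
have E2 : dsum (fun i j => (a i * b j - a j * b i) ^ 2) =
  dsum (fun i j => (a i * a i) * (b j * b j)) + dsum (fun i j => (b i * b i) * (a j * a j))
  + (-2) * dsum (fun i j => (a i * b i) * (a j * b j)).
  rewrite -dsum_scal -!dsum_add; apply: dsum_ext => i j; ring.
rewrite E2 !dsum_sep in E.
set A := sumR _ in E *. set B := sumR _ in E *. set S := sumR _ in E *. clearbody A B S. nra.
Qed.

Lemma sumR_term_le n (F : 'I_n -> R) i : (forall j, 0 <= F j) -> F i <= sumR F.
Proof.
move=> H; rewrite /sumR (bigD1 i) //=.
set s := (X in _ <= _ + X).
have: 0 <= s by rewrite /s; apply: (big_ind (fun x => 0 <= x)) => //; [lra| move=> *; lra].
lra.
Qed.

Section Mat.
Variable n : nat.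
Variable A : 'I_n -> 'I_n -> R.
Variable g : 'I_n -> R.
Hypothesis Asym : forall i j, A i j = A j i.
Let v i := sumR (fun j => A i j * g j).
Let t := sumR (fun i => g i * g i).
Let V := sumR (fun i => v i * v i).
Let P0 := sumR (fun i => g i * v i).
Let L := sumR (fun i => A i i).
Let H := dsum (fun i j => A i j * A i j).
Let d (i j : 'I_n) := if i == j then 1 else 0.

Lemma g_AT2 : dsum (fun i j => A i j * (v i * g j)) = V.
Proof. rewrite /dsum /V; apply: sumR_ext => i.
rewrite -(sumR_ext (F := fun j => v i * (A i j * g j))); first by rewrite sumR_scal.
move=> j; ring. Qed.
Lemma g_AT3 : dsum (fun i j => A i j * (g i * v j)) = V.
Proof. rewrite /dsum sumR_swap -g_AT2 /dsum; apply: sumR_ext => i; apply: sumR_ext => j.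
rewrite Asym; ring. Qed.
Lemma g_AT4 : dsum (fun i j => A i j * (g i * g j)) = P0.
Proof. rewrite /dsum /P0; apply: sumR_ext => i.
rewrite -(sumR_ext (F := fun j => g i * (A i j * g j))); first by rewrite sumR_scal.
move=> j; ring. Qed.
Lemma g_AT5 : dsum (fun i j => A i j * d i j) = L.
Proof. rewrite /dsum /L; apply: sumR_ext => i; rewrite /d sumR_delta //. Qed.
Lemma g_22 : dsum (fun i j => (v i * g j) * (v i * g j)) = V * t.
Proof. rewrite -dsum_sep; apply: dsum_ext => i j; ring. Qed.
Lemma g_23 : dsum (fun i j => (v i * g j) * (g i * v j)) = P0 * P0.
Proof. rewrite -dsum_sep; apply: dsum_ext => i j; ring. Qed.
Lemma g_33 : dsum (fun i j => (g i * v j) * (g i * v j)) = V * t.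
Proof. rewrite Rmult_comm -dsum_sep; apply: dsum_ext => i j; ring. Qed.
Lemma g_24 : dsum (fun i j => (v i * g j) * (g i * g j)) = P0 * t.
Proof. rewrite -dsum_sep; apply: dsum_ext => i j; ring. Qed.
Lemma g_34 : dsum (fun i j => (g i * v j) * (g i * g j)) = P0 * t.
Proof. rewrite Rmult_comm -dsum_sep; apply: dsum_ext => i j; ring. Qed.
Lemma g_44 : dsum (fun i j => (g i * g j) * (g i * g j)) = t * t.
Proof. rewrite -dsum_sep; apply: dsum_ext => i j; ring. Qed.
Lemma g_25 : dsum (fun i j => (v i * g j) * d i j) = P0.
Proof. rewrite /dsum /P0; apply: sumR_ext => i.
rewrite -(sumR_ext (F := fun j => v i * (g j * d i j))); first by rewrite sumR_scal /d sumR_delta; ring.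
move=> j; ring. Qed.
Lemma g_35 : dsum (fun i j => (g i * v j) * d i j) = P0.
Proof. rewrite /dsum /P0; apply: sumR_ext => i.
rewrite -(sumR_ext (F := fun j => g i * (v j * d i j))); first by rewrite sumR_scal /d sumR_delta.
move=> j; ring. Qed.
Lemma g_45 : dsum (fun i j => (g i * g j) * d i j) = t.
Proof. rewrite /dsum /t; apply: sumR_ext => i.
rewrite -(sumR_ext (F := fun j => g i * (g j * d i j))); first by rewrite sumR_scal /d sumR_delta.
move=> j; ring. Qed.
Lemma g_55 : dsum (fun i j => d i j * d i j) = INR n.
Proof. rewrite /dsum -sumR_const1; apply: sumR_ext => i.
rewrite -(sumR_ext (F := fun j => 1 * d i j)); first by rewrite /d sumR_delta.
move=> j; rewrite /d; case: (i == j); ring. Qed.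

Lemma mat_ineq : (2 <= n)%nat -> 0 < t ->
  2 * V / t - P0 * P0 / (t * t) + (L - P0 / t) ^ 2 / (INR n - 1) <= H.
Proof.
move=> n2 tpos.
have m1 : 1 <= INR n - 1.
  have: INR 2 <= INR n by apply: le_INR; apply/leP. rewrite /=; lra.
set c := (L - P0 / t) / (INR n - 1).
set c2 := - / t. set c4 := P0 / (t * t) + c / t. set c5 := - c.
have E := dsum_ge0 (F := fun i j => (A i j + c2 * (v i * g j) + c2 * (g i * v j)
    + c4 * (g i * g j) + c5 * d i j) ^ 2) (fun i j => pow2_ge_0 _).
have E2 : dsum (fun i j => (A i j + c2 * (v i * g j) + c2 * (g i * v j)
    + c4 * (g i * g j) + c5 * d i j) ^ 2) =
  H + 2 * c2 * dsum (fun i j => A i j * (v i * g j)) + 2 * c2 * dsum (fun i j => A i j * (g i * v j))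
  + 2 * c4 * dsum (fun i j => A i j * (g i * g j)) + 2 * c5 * dsum (fun i j => A i j * d i j)
  + c2 * c2 * dsum (fun i j => (v i * g j) * (v i * g j))
  + 2 * c2 * c2 * dsum (fun i j => (v i * g j) * (g i * v j))
  + c2 * c2 * dsum (fun i j => (g i * v j) * (g i * v j))
  + 2 * c2 * c4 * dsum (fun i j => (v i * g j) * (g i * g j))
  + 2 * c2 * c4 * dsum (fun i j => (g i * v j) * (g i * g j))
  + 2 * c2 * c5 * dsum (fun i j => (v i * g j) * d i j)
  + 2 * c2 * c5 * dsum (fun i j => (g i * v j) * d i j)
  + c4 * c4 * dsum (fun i j => (g i * g j) * (g i * g j))
  + 2 * c4 * c5 * dsum (fun i j => (g i * g j) * d i j)
  + c5 * c5 * dsum (fun i j => d i j * d i j).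
  rewrite -!dsum_scal -!dsum_add /H; apply: dsum_ext => i j; ring.
rewrite g_AT2 g_AT3 g_AT4 g_AT5 g_22 g_23 g_33 g_24 g_34 g_25 g_35 g_44 g_45 g_55 in E2.
rewrite E2 in E.
suff E3 : H + 2 * c2 * V + 2 * c2 * V + 2 * c4 * P0 + 2 * c5 * L
  + c2 * c2 * (V * t) + 2 * c2 * c2 * (P0 * P0) + c2 * c2 * (V * t)
  + 2 * c2 * c4 * (P0 * t) + 2 * c2 * c4 * (P0 * t)
  + 2 * c2 * c5 * P0 + 2 * c2 * c5 * P0 + c4 * c4 * (t * t)
  + 2 * c4 * c5 * t + c5 * c5 * INR n
  = H - (2 * V / t - P0 * P0 / (t * t) + (L - P0 / t) ^ 2 / (INR n - 1)) by lra.
rewrite /c2 /c4 /c5 /c.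
have -> : INR n = (INR n - 1) + 1 by ring.
move: (INR n - 1) m1 => m m1.
field; lra.
Qed.
End Mat.

Lemma t1 (m k g : R) : 1 <= m -> -1 < k -> k < 0 -> g*m > -(m+1) ->
  k*(g*m - k*(m-1)) > 0 -> g*m + 2*k < 0 -> g*m + 2*k + 2*(k*(g*m - k*(m-1))) <= 0.
Proof. intros. assert (gm: g*m - k*(m-1) < 0) by nra.
destruct (Rle_or_lt (-k) (1/2)); nra. Qed.

Definition f1c (m k g : R) := (1+k)*((1-k) + (1+k)/m + g).
Definition cfc (m k g : R) := Rmin (1 + 1/m) (f1c m k g).

Lemma fs_lb (m k g s : R) : 1 <= m -> -1 < k -> g*m > -(m+1) ->
  0 <= s <= 1 ->
  cfc m k g <= 1 + (1 + k*s)^2/m - k^2*s^2 + g*s*(1+k*s).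
Proof.
move=> m1 k1 gm [s0 s1].
set A' := k*(g*m - k*(m-1)). set B' := g*m + 2*k.
have EF : forall s, m * (1 + (1 + k*s)^2/m - k^2*s^2 + g*s*(1+k*s)) = (m+1) + s*B' + s^2*A'.
  move=> x; rewrite /A' /B'; field; lra.
have EF1 : m * f1c m k g = (m+1) + B' + A'.
  rewrite /f1c /A' /B'; field; lra.
suff: Rmin (m+1) (m * f1c m k g) <= m * (1 + (1 + k*s)^2/m - k^2*s^2 + g*s*(1+k*s)).
  rewrite /cfc => H.
  have H1 := Rmin_l (1 + 1/m) (f1c m k g). have H2 := Rmin_r (1 + 1/m) (f1c m k g).
  have Hm : m * Rmin (1 + 1/m) (f1c m k g) <= Rmin (m+1) (m * f1c m k g).
    apply: Rmin_glb.
    + have ->: m + 1 = m * (1 + 1/m) by field; lra.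
      apply: Rmult_le_compat_l; lra.
    + apply: Rmult_le_compat_l; lra.
  apply: (Rmult_le_reg_l m); first lra. lra.
rewrite EF EF1.
have [HA|HA] := Rle_or_lt A' 0.
- have ss : s*(1-s) >= 0 by nra.
  have: (m+1) + s*B' + s^2*A' >= (1-s)*(m+1) + s*((m+1)+B'+A') by nra.
  move: (Rmin_l (m+1) ((m+1)+B'+A')) (Rmin_r (m+1) ((m+1)+B'+A')); nra.
- have [HB|HB] := Rle_or_lt 0 B'.
  + have: (m+1) + s*B' + s^2*A' >= m+1 by nra.
    move: (Rmin_l (m+1) ((m+1)+B'+A')); lra.
  + have kneg : k < 0.
      have [k0|k0] := Rle_or_lt 0 k; last by [].
      exfalso. rewrite /A' /B' in HA HB.
      have [k00|k00] := Rle_lt_or_eq_dec 0 k k0.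
      * have : g*m - k*(m-1) > 0 by nra. nra.
      * subst k; lra.
    have H2 := t1 m1 k1 kneg gm HA HB.
    rewrite -/A' -/B' in H2.
    have H3 : B' + (s+1)*A' <= 0 by nra.
    have: (m+1) + s*B' + s^2*A' - ((m+1)+B'+A') = (s-1)*(B' + (s+1)*A') by ring.
    have: (s-1)*(B' + (s+1)*A') >= 0 by nra.
    move=> *.
    move: (Rmin_r (m+1) ((m+1)+B'+A')); lra.
Qed.

Lemma Rdiv_le_0_compat_l a b : 0 <= a -> 0 < b -> 0 <= a / b.
Proof. move=> ha hb; apply: Rmult_le_pos => //; left; exact: Rinv_0_lt_compat. Qed.

Definition cQc (m k g : R) := Rmin (cfc m k g) (Rmin 2 (2+g)) / (1 + k^2).

Lemma cQc_pos m k g : 1 <= m -> -1 < k -> g*m > -(m+1) -> 0 < f1c m k g -> 0 < cQc m k g.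
Proof.
move=> m1 k1 gm f1.
have g2 : 2 + g > 0.
  have: g > -(1 + 1/m). { apply: (Rmult_lt_reg_r m); first lra. 
  have ->: -(1+1/m)*m = -(m+1) by field; lra. lra. }
  have: 1/m <= 1. { apply: (Rmult_le_reg_r m); first lra. have ->: 1/m*m = 1 by field; lra. lra. }
  lra.
rewrite /cQc /cfc. apply: Rdiv_lt_0_compat; last nra.
have h1: 0 < 1 + 1/m. { have: 0 < 1/m by apply: Rdiv_lt_0_compat; lra. lra. }
repeat apply: Rmin_glb_lt; lra.
Qed.

Lemma Q_lb (m k g H L P0 V t eps : R) :
  1 <= m -> -1 < k -> g*m > -(m+1) -> 0 < f1c m k g ->
  0 <= t -> 0 < eps -> (t + eps) * L = - k * P0 -> 0 <= H ->
  (t = 0 -> P0 = 0 /\ V = 0) ->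
  (0 < t -> 2 * V / t - P0 * P0 / (t * t) + (L - P0 / t) ^ 2 / m <= H) ->
  P0 * P0 <= t * V ->
  cQc m k g * (V / (t + eps) + L ^ 2) <= H - L ^ 2 - g * (L * P0 - V) / (t + eps).
Proof.
move=> m1 k1 gm f1 t0 e0 eqL H0 Ht0 Hlb CS.
have cpos := cQc_pos m1 k1 gm f1.
have g2 : 2 + g > 0.
  have: g > -(1 + 1/m). { apply: (Rmult_lt_reg_r m); first lra. 
  have ->: -(1+1/m)*m = -(m+1) by field; lra. lra. }
  have: 1/m <= 1. { apply: (Rmult_le_reg_r m); first lra. have ->: 1/m*m = 1 by field; lra. lra. }
  lra.
have [tz|tp] := Rle_lt_or_eq_dec 0 t t0; last first.
  subst t. case: (Ht0 erefl) => eP eV; rewrite eP eV; rewrite eP in eqL.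
  have ->: L = 0. { have: (0 + eps) * L = 0 by rewrite eqL; ring. move=> h.
    case: (Rmult_integral _ _ h) => //; lra. }
  have ->: 0 / (0 + eps) + 0 ^ 2 = 0 by field; lra.
  have ->: H - 0 ^ 2 - g * (0 * 0 - 0) / (0 + eps) = H by field; lra.
  lra.
have Hl := Hlb tz.
set a := t + eps in eqL *.
have apos : 0 < a by rewrite /a; lra.
set s := t / a. set al := P0 / t. set be := V / t - al ^ 2.
have s01 : 0 <= s <= 1.
  rewrite /s; split; first by apply: Rdiv_le_0_compat_l; lra.
  apply: (Rmult_le_reg_r a) => //. have ->: t / a * a = t by field; lra. rewrite /a; lra.
have eP0 : P0 = s * a * al by rewrite /s /al; field; lra.
have eV : V = s * a * (al ^ 2 + be) by rewrite /s /be /al; field; lra.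
have et : t = s * a by rewrite /s; field; lra.
have eL : L = - k * s * al.
  apply: (Rmult_eq_reg_l a); last lra. rewrite eqL eP0; ring.
have be0 : 0 <= be.
  rewrite /be /al. have: P0 * P0 / (t * t) <= V / t.
    apply: (Rmult_le_reg_r (t * t)); first nra.
    have ->: P0 * P0 / (t * t) * (t * t) = P0 * P0 by field; lra.
    have ->: V / t * (t * t) = t * V by field; lra. lra.
  have ->: (P0 / t) ^ 2 = P0 * P0 / (t * t) by field; lra. lra.
have Hl' : al ^ 2 + 2 * be + (al * (1 + k * s)) ^ 2 / m <= H.
  have ->: al ^ 2 + 2 * be + (al * (1 + k * s)) ^ 2 / m =
    2 * V / t - P0 * P0 / (t * t) + (L - P0 / t) ^ 2 / m.
    rewrite eL /be /al. field; lra.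
  exact: Hl.
have ->: H - L ^ 2 - g * (L * P0 - V) / a =
  H - k^2 * s^2 * al^2 + g * (k * s^2 * al^2 + s * (al^2 + be)).
  rewrite eL eP0 eV; field; lra.
have ->: V / a + L ^ 2 = s * (al^2 + be) + k^2 * s^2 * al^2.
  rewrite eL eV; field; lra.
have Hf := fs_lb m1 k1 gm s01.
set mn := Rmin (cfc m k g) (Rmin 2 (2 + g)).
have mn1 : mn <= cfc m k g by apply: Rmin_l.
have mn2 : mn <= 2 + g * s.
  have: mn <= Rmin 2 (2+g) by apply: Rmin_r.
  move: (Rmin_l 2 (2+g)) (Rmin_r 2 (2+g)) => *.
  destruct (Rle_or_lt 0 g); nra.
have Q1 : mn * (al^2 + be) <= H - k^2 * s^2 * al^2 + g * (k * s^2 * al^2 + s * (al^2 + be)).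
  have e1: H - k^2 * s^2 * al^2 + g * (k * s^2 * al^2 + s * (al^2 + be)) >=
     al^2 * (1 + (1 + k*s)^2/m - k^2*s^2 + g*s*(1+k*s)) + be * (2 + g * s).
    have: (al * (1 + k * s)) ^ 2 / m = al^2 * ((1 + k*s)^2/m) by field; lra.
    nra.
  have: al^2 * cfc m k g <= al^2 * (1 + (1 + k*s)^2/m - k^2*s^2 + g*s*(1+k*s)).
    apply: Rmult_le_compat_l => //; nra.
  have: be * mn <= be * (2 + g * s) by apply: Rmult_le_compat_l.
  have: al^2 * mn <= al^2 * cfc m k g by apply: Rmult_le_compat_l; nra.
  nra.
have mnpos : 0 < mn by move: cpos; rewrite /cQc -/mn => h; 
  apply: (Rmult_lt_reg_r (/ (1 + k^2))); [apply: Rinv_0_lt_compat; nra | lra].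
have ->: cQc m k g = mn / (1 + k^2) by [].
have S1 : s * (al^2 + be) + k^2 * s^2 * al^2 <= (1 + k^2) * (al^2 + be).
  have: s^2 <= 1 by nra. have: s * (al^2+be) <= al^2 + be by nra. nra.
have: mn / (1 + k ^ 2) * (s * (al ^ 2 + be) + k ^ 2 * s ^ 2 * al ^ 2) <= mn * (al^2 + be).
  have ->: mn * (al^2 + be) = mn / (1 + k^2) * ((1 + k^2) * (al^2 + be)) by field; nra.
  apply: Rmult_le_compat_l => //. apply: Rdiv_le_0_compat_l; nra.
lra.
Qed.

Lemma cross_lb (c x S Z aY : R) : 0 < c -> 0 <= S -> 0 <= aY -> Z^2 <= 2 * S * aY ->
  2 * x * Z <= c / 2 * x^2 * S + 4 / c * aY.
Proof.
move=> c0 S0 a0 HZ.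
set u := c / 2 * x^2 * S. set y := 4 / c * aY.
have u0 : 0 <= u.
  rewrite /u. have h: 0 <= c/2 by lra. apply: Rmult_le_pos => //; nra.
have y0 : 0 <= y by rewrite /y; apply: Rmult_le_pos => //; apply: Rdiv_le_0_compat_l; lra.
have uy : u * y = 2 * x^2 * (S * aY) by rewrite /u /y; field; lra.
have h1 : 0 <= (u - y)^2 by apply: pow2_ge_0.
have h2 : x^2 * Z^2 <= x^2 * (2 * S * aY) by apply: Rmult_le_compat_l => //; apply: pow2_ge_0.
have h3 : (2 * x * Z)^2 <= (u + y)^2.
  have ->: (u + y)^2 = (u - y)^2 + 4 * (u * y) by ring.
  rewrite uy. have ->: (2 * x * Z)^2 = 4 * (x^2 * Z^2) by ring. lra.
have h4 : 0 <= u + y by lra.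
destruct (Rle_or_lt (2 * x * Z) 0) as [h|h]; first lra.
apply: Rsqr_incr_0_var; rewrite /Rsqr; lra.
Qed.

Lemma pointwise_main (m k g H L P0 V t eps w ph X1 X2 Y : R) :
  1 <= m -> -1 < k -> g*m > -(m+1) -> 0 < f1c m k g ->
  0 <= t -> 0 < eps -> (t + eps) * L = - k * P0 -> 0 <= H ->
  (t = 0 -> P0 = 0 /\ V = 0) ->
  (0 < t -> 2 * V / t - P0 * P0 / (t * t) + (L - P0 / t) ^ 2 / m <= H) ->
  P0 * P0 <= t * V -> 0 <= V ->
  0 < w -> 0 <= Y -> X1 * X1 <= t * Y -> X2 * X2 <= V * Y ->
  cQc m k g / 2 * (V / (t + eps) * w * ph ^ 2 + L ^ 2 * w * ph ^ 2) <=
  - ((L ^ 2 - H) * w * ph ^ 2 + g * (w / (t + eps)) * ph ^ 2 * (L * P0 - V)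
     + 2 * w * ph * (L * X1 - X2)) + 4 / cQc m k g * (w * (t + eps) * Y).
Proof.
move=> m1 k1 gm f1 t0 e0 eqL H0 Ht0 Hlb CS V0 w0 Y0 HX1 HX2.
have Q := Q_lb m1 k1 gm f1 t0 e0 eqL H0 Ht0 Hlb CS.
have cpos := cQc_pos m1 k1 gm f1.
set c := cQc m k g in Q cpos *.
set a := t + eps in Q *.
have apos : 0 < a by rewrite /a; lra.
set S := V / a + L ^ 2.
have S0 : 0 <= S by rewrite /S; have := Rdiv_le_0_compat_l V0 apos; nra.
have HZ : (L * X1 - X2)^2 <= 2 * S * (a * Y).
  have h1 : (L*X1 - X2)^2 <= 2 * (L^2 * (X1*X1)) + 2 * (X2 * X2).
    have := pow2_ge_0 (L*X1+X2). move=> h.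
    have ->: (L*X1 - X2)^2 = 2 * (L^2 * (X1*X1)) + 2 * (X2 * X2) - (L*X1+X2)^2 by ring. lra.
  have h2 : L^2 * (X1 * X1) <= L^2 * (a * Y).
    apply: Rmult_le_compat_l; first by apply: pow2_ge_0. rewrite /a; nra.
  have h3 : V * Y = V / a * (a * Y) by field; lra.
  have ->: 2 * S * (a * Y) = 2 * (L^2 * (a * Y)) + 2 * (V / a * (a * Y)) by rewrite /S; ring.
  lra.
have CR := cross_lb ph cpos S0 (Rmult_le_pos _ _ (Rlt_le _ _ apos) Y0) HZ.
have E1 : (L ^ 2 - H) * w * ph ^ 2 + g * (w / a) * ph ^ 2 * (L * P0 - V) =
   - w * ph^2 * (H - L ^ 2 - g * (L * P0 - V) / a) by field; lra.
rewrite E1.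
have E2 : c / 2 * (V / a * w * ph ^ 2 + L ^ 2 * w * ph ^ 2) = w * (c / 2 * ph^2 * S)
  by rewrite /S; field; lra.
rewrite E2.
have: w * ph^2 * (c * S) <= w * ph^2 * (H - L ^ 2 - g * (L * P0 - V) / a).
  apply: Rmult_le_compat_l => //; nra.
have: w * (2 * ph * (L * X1 - X2)) <= w * (c / 2 * ph ^ 2 * S + 4 / c * (a * Y)).
  apply: Rmult_le_compat_l => //; lra.
nra.
Qed.

Lemma ballR (x e y : R) : ball x e y <-> Rabs (y - x) < e.
Proof. by rewrite /ball /= /AbsRing_ball /abs /minus /plus /opp /=. Qed.

Lemma cont_R (f : R -> R) x :
  (forall eps, 0 < eps -> exists d, 0 < d /\ forall y, Rabs (y - x) < d -> Rabs (f y - f x) < eps) ->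
  continuous f x.
Proof.
move=> H; apply/filterlim_locally => eps.
have [d [d0 Hd]] := H eps (cond_pos eps).
exists (mkposreal d d0) => y /ballR /= hy. apply/ballR; exact: Hd.
Qed.

Lemma R_cont (f : R -> R) x : continuous f x ->
  forall eps, 0 < eps -> exists d, 0 < d /\ forall y, Rabs (y - x) < d -> Rabs (f y - f x) < eps.
Proof.
move=> /filterlim_locally H eps e0.
have [d Hd] := H (mkposreal eps e0).
exists d; split; first exact: cond_pos.
move=> y hy; apply/ballR; apply: Hd; exact/ballR.
Qed.

Definition init k (w : Pt k.+1) : Pt k := fun j => w (lift ord_max j).
Definition lastc k (w : Pt k.+1) : R := w ord_max.

Lemma ext_lift k (y : Pt k) t j : ext_pt y t (lift ord_max j) = y j.
Proof. by rewrite /ext_pt liftK. Qed.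
Lemma ext_max k (y : Pt k) t : ext_pt y t ord_max = t.
Proof. by rewrite /ext_pt unlift_none. Qed.
Lemma init_ext k (y : Pt k) t : init (ext_pt y t) = y.
Proof. apply: functional_extensionality => j; exact: ext_lift. Qed.
Lemma last_ext k (y : Pt k) t : lastc (ext_pt y t) = t.
Proof. exact: ext_max. Qed.
Lemma ext_init k (w : Pt k.+1) : ext_pt (init w) (lastc w) = w.
Proof.
apply: functional_extensionality => j; rewrite /ext_pt.
by case: unliftP => [j' ->|->] //.
Qed.

Lemma near_ext k (y y' : Pt k) t t' d :
  near_pt (ext_pt y t) (ext_pt y' t') d <-> near_pt y y' d /\ Rabs (t' - t) < d.
Proof.
split.
- move=> H; split; last by move: (H ord_max); rewrite !ext_max.
  move=> j; move: (H (lift ord_max j)); by rewrite !ext_lift.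
- case=> H1 H2 j; rewrite /ext_pt; case: unliftP => [j' _|_] //; exact: H1.
Qed.

Lemma near_init k (w w' : Pt k.+1) d : near_pt w w' d -> near_pt (init w) (init w') d.
Proof. move=> H j; exact: H. Qed.

Lemma near_refl k (x : Pt k) d : 0 < d -> near_pt x x d.
Proof. move=> d0 j; rewrite Rminus_diag Rabs_R0 //. Qed.

Lemma near_sym k (x y : Pt k) d : near_pt x y d -> near_pt y x d.
Proof. move=> H j; rewrite Rabs_minus_sym; exact: H. Qed.

Lemma near_mono k (x y : Pt k) d d' : d <= d' -> near_pt x y d -> near_pt x y d'.
Proof. move=> le H j; move: (H j); lra. Qed.

Lemma near_trans k (x y z : Pt k) d d' : near_pt x y d -> near_pt y z d' -> near_pt x z (d + d').
Proof.
move=> H1 H2 j; move: (H1 j) (H2 j) => a b.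
have := Rabs_triang (y j - x j) (z j - y j).
have ->: y j - x j + (z j - y j) = z j - x j by ring. lra.
Qed.

Definition jcont m (G : Pt m -> R -> R) := forall z s eps, 0 < eps -> exists d, 0 < d /\
  forall z' s', near_pt z z' d -> Rabs (s' - s) < d -> Rabs (G z' s' - G z s) < eps.

Lemma jcont_slice m (G : Pt m -> R -> R) z : jcont G -> forall s, continuous (G z) s.
Proof.
move=> H s; apply: cont_R => eps e0.
have [d [d0 Hd]] := H z s eps e0.
exists d; split => // y hy; apply: Hd => //; exact: near_refl.
Qed.

Lemma RInt_diff_bound (f g : R -> R) a b B :
  ex_RInt f a b -> ex_RInt g a b ->
  (forall s, Rmin a b <= s <= Rmax a b -> Rabs (f s - g s) <= B) ->
  Rabs (RInt f a b - RInt g a b) <= Rabs (b - a) * B.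
Proof.
move=> hf hg hB.
have E: RInt f a b - RInt g a b = RInt (fun s => f s - g s) a b.
  by rewrite (RInt_minus f g a b hf hg).
have hfg : ex_RInt (fun s => f s - g s) a b by apply: (ex_RInt_minus f g).
rewrite E.
have [ab|ab] := Rle_or_lt a b.
- rewrite (Rabs_right (b - a)); last lra.
  apply: abs_RInt_le_const => // t ht; apply: hB; rewrite Rmin_left ?Rmax_right; lra.
- rewrite -opp_RInt_swap; last exact: ex_RInt_swap.
  have ->: forall x : R, opp x = - x by [].
  rewrite Rabs_Ropp (Rabs_left (b - a)); last lra.
  have ->: - (b - a) = a - b by ring.
  apply: abs_RInt_le_const; first lra; first exact: ex_RInt_swap.
  move=> t ht; apply: hB; rewrite Rmin_right ?Rmax_left; lra.
Qed.

Lemma RInt_param_cont m (G : Pt m -> R -> R) a b : jcont G ->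
  forall z, cont_at (fun z => RInt (G z) a b) z.
Proof.
move=> HG z eps e0.
set e' := eps / (2 * (Rabs (b - a) + 1)).
have e'0 : 0 < e' by rewrite /e'; apply: Rdiv_lt_0_compat => //; have := Rabs_pos (b - a); lra.
have Hch : forall s, { d : R | 0 < d /\ forall z' s', near_pt z z' d -> Rabs (s' - s) < d -> Rabs (G z' s' - G z s) < e' }.
  move=> s. apply: constructive_indefinite_description. exact: HG.
pose dl := fun s => mkposreal (proj1_sig (Hch s)) (proj1 (proj2_sig (Hch s))).
have [d Hd] := compactness_value_1d (Rmin a b) (Rmax a b) dl.
exists d; split; first exact: cond_pos.
move=> z' hz'.
have ex1 : ex_RInt (G z') a b by apply: ex_RInt_continuous => s _; exact: jcont_slice.
have ex2 : ex_RInt (G z) a b by apply: ex_RInt_continuous => s _; exact: jcont_slice.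
apply: Rle_lt_trans; first apply: (RInt_diff_bound (B := 2 * e') ex1 ex2).
- move=> s hs. apply: Rlt_le. have := Hd s hs. move=> NN.
  apply: NNPP => Hn; apply: NN => -[t [ht [hst hdt]]].
  apply: Hn. have [_ Ht] := proj2_sig (Hch t).
  have h1 : Rabs (G z' s - G z t) < e'.
    apply: Ht; first by apply: (near_mono _ hz'); exact: hdt. exact: hst.
  have h2 : Rabs (G z s - G z t) < e'.
    apply: Ht; first by apply: near_refl; exact: (proj1 (proj2_sig (Hch t))). exact: hst.
  have := Rabs_triang (G z' s - G z t) (G z t - G z s).
  rewrite Rabs_minus_sym in h2.
  have ->: G z' s - G z t + (G z t - G z s) = G z' s - G z s by ring. lra.
- rewrite /e'. have := Rabs_pos (b - a) => h.
  have ->: Rabs (b - a) * (2 * (eps / (2 * (Rabs (b - a) + 1)))) = eps * (Rabs (b - a) / (Rabs (b - a) + 1)) by field; lra.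
  have : Rabs (b - a) / (Rabs (b - a) + 1) < 1.
    apply: (Rmult_lt_reg_r (Rabs (b - a) + 1)); first lra.
    have ->: Rabs (b - a) / (Rabs (b - a) + 1) * (Rabs (b - a) + 1) = Rabs (b - a) by field; lra. lra.
  move=> h'; have: 0 <= Rabs (b - a) / (Rabs (b - a) + 1) by apply: Rmult_le_pos => //; left; apply: Rinv_0_lt_compat; lra.
  nra.
Qed.

Definition jc m k (f : Pt m -> Pt k -> R) := forall z y eps, 0 < eps -> exists d, 0 < d /\
  forall z' y', near_pt z z' d -> near_pt y y' d -> Rabs (f z' y' - f z y) < eps.

Lemma box_S k M (f : Pt k.+1 -> R) :
  box_int M f = RInt (fun t => box_int M (fun y : Pt k => f (ext_pt y t))) (- M) M.
Proof. by []. Qed.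

Lemma box_cont k : forall m (f : Pt m -> Pt k -> R) M, jc f ->
  forall z, cont_at (fun z => box_int M (f z)) z.
Proof.
elim: k => [|k IH] m f M Hf z.
- move=> eps e0 /=. have [d [d0 Hd]] := Hf z (fun _ => 0) eps e0.
  exists d; split => // z' hz'; apply: Hd => //; exact: near_refl.
- pose g := fun (w : Pt m.+1) (y : Pt k) => f (init w) (ext_pt y (lastc w)).
  have Hg : jc g.
    move=> w y eps e0. have [d [d0 Hd]] := Hf (init w) (ext_pt y (lastc w)) eps e0.
    exists d; split => // w' y' hw hy; apply: Hd; first exact: near_init.
    apply/near_ext; split => //; exact: hw.
  have HGb := IH _ g M Hg.
  pose G := fun z s => box_int M (g (ext_pt z s)).
  have EG : forall z s, G z s = box_int M (fun y => f z (ext_pt y s)).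
    move=> z0 s; rewrite /G /g init_ext last_ext //.
  have HG : jcont G.
    move=> z0 s eps e0. have [d [d0 Hd]] := HGb (ext_pt z0 s) eps e0.
    exists d; split => // z' s' hz hs; apply: Hd; apply/near_ext; split => //.
  have := RInt_param_cont (- M) M HG z.
  have -> : (fun z => RInt (G z) (- M) M) = (fun z => box_int M (f z)).
    apply: functional_extensionality => z0; rewrite box_S; apply: RInt_ext => s _; exact: EG.
  done.
Qed.

Definition contR k (f : Pt k -> R) := forall x, cont_at f x.

Lemma contR_jc k (f : Pt k.+1 -> R) : contR f ->
  jc (fun (z : Pt 1) (y : Pt k) => f (ext_pt y (z ord0))).
Proof.
move=> Hf z y eps e0. have [d [d0 Hd]] := Hf (ext_pt y (z ord0)) eps e0.
exists d; split => // z' y' hz hy; apply: Hd; apply/near_ext; split => //; exact: hz.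
Qed.

Definition pt1 (s : R) : Pt 1 := fun _ => s.

Lemma box_slice_cont k M (f : Pt k.+1 -> R) : contR f ->
  forall s, continuous (fun s => box_int M (fun y => f (ext_pt y s))) s.
Proof.
move=> Hf s; apply: cont_R => eps e0.
have [d [d0 Hd]] := box_cont M (contR_jc Hf) (pt1 s) e0.
exists d; split => // s' hs; apply: (Hd (pt1 s')) => j; exact: hs.
Qed.

Lemma box_slice_ex k M (f : Pt k.+1 -> R) : contR f ->
  ex_RInt (fun s => box_int M (fun y => f (ext_pt y s))) (- M) M.
Proof. move=> Hf; apply: ex_RInt_continuous => s _; exact: box_slice_cont. Qed.

Lemma cont_ext_slice k (f : Pt k.+1 -> R) s : contR f -> contR (fun y => f (ext_pt y s)).
Proof.
move=> Hf y eps e0. have [d [d0 Hd]] := Hf (ext_pt y s) eps e0.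
exists d; split => // y' hy; apply: Hd; apply/near_ext; split => //; rewrite Rminus_diag Rabs_R0 //.
Qed.

Lemma contR_plus k (f g : Pt k -> R) : contR f -> contR g -> contR (fun x => f x + g x).
Proof.
move=> Hf Hg x eps e0.
have [d1 [d10 H1]] := Hf x (eps/2) ltac:(lra). have [d2 [d20 H2]] := Hg x (eps/2) ltac:(lra).
exists (Rmin d1 d2); split; first by apply: Rmin_glb_lt.
move=> y hy. have h1 := H1 y (near_mono (Rmin_l _ _) hy). have h2 := H2 y (near_mono (Rmin_r _ _) hy).
have := Rabs_triang (f y - f x) (g y - g x).
have ->: f y - f x + (g y - g x) = f y + g y - (f x + g x) by ring. lra.
Qed.

Lemma contR_scal k c (f : Pt k -> R) : contR f -> contR (fun x => c * f x).
Proof.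
move=> Hf x eps e0.
have [d [d0 H]] := Hf x (eps / (Rabs c + 1)) ltac:(apply: Rdiv_lt_0_compat => //; have := Rabs_pos c; lra).
exists d; split => // y hy. have h := H y hy.
have ->: c * f y - c * f x = c * (f y - f x) by ring. rewrite Rabs_mult.
have hc := Rabs_pos c.
have: Rabs c * Rabs (f y - f x) <= Rabs c * (eps / (Rabs c + 1)) by apply: Rmult_le_compat_l; lra.
have: Rabs c * (eps / (Rabs c + 1)) < eps.
  have ->: Rabs c * (eps / (Rabs c + 1)) = eps - eps / (Rabs c + 1) by field; lra.
  have: 0 < eps / (Rabs c + 1) by apply: Rdiv_lt_0_compat; lra. lra.
lra.
Qed.

Lemma contR_const k c : contR (fun _ : Pt k => c).
Proof. move=> x eps e0; exists 1; split; [lra|] => y _; rewrite Rminus_diag Rabs_R0 //. Qed.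

Lemma RInt_plusR (f g : R -> R) a b : ex_RInt f a b -> ex_RInt g a b ->
  RInt (fun x => f x + g x) a b = RInt f a b + RInt g a b.
Proof. move=> hf hg; exact: RInt_plus. Qed.
Lemma RInt_scalR (f : R -> R) a b c : ex_RInt f a b ->
  RInt (fun x => c * f x) a b = c * RInt f a b.
Proof. move=> hf; exact: RInt_scal. Qed.
Lemma RInt_constR a b c : RInt (fun _ => c) a b = (b - a) * c.
Proof. exact: RInt_const. Qed.

Lemma box_plus k M (f g : Pt k -> R) : contR f -> contR g ->
  box_int M (fun x => f x + g x) = box_int M f + box_int M g.
Proof.
elim: k f g => [|k IH] f g Hf Hg //=.
rewrite -(RInt_plusR (box_slice_ex M Hf) (box_slice_ex M Hg)).
apply: RInt_ext => s _. rewrite (IH (fun y => f (ext_pt y s)) (fun y => g (ext_pt y s))) //;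
  exact: cont_ext_slice.
Qed.

Lemma box_scal k M c (f : Pt k -> R) : contR f -> box_int M (fun x => c * f x) = c * box_int M f.
Proof.
elim: k f => [|k IH] f Hf //=.
rewrite -(RInt_scalR _ (box_slice_ex M Hf)).
apply: RInt_ext => s _. rewrite (IH (fun y => f (ext_pt y s))) //; exact: cont_ext_slice.
Qed.

Lemma box_zero k M : box_int M (fun _ : Pt k => 0) = 0.
Proof.
elim: k => [|k IH] //=. rewrite (RInt_ext _ (fun _ => 0)); last by move=> *; exact: IH.
rewrite RInt_constR; ring.
Qed.

Lemma box_ext k M (f g : Pt k -> R) : (forall x, f x = g x) -> box_int M f = box_int M g.
Proof. move=> H; have -> // : f = g by apply: functional_extensionality. Qed.

Lemma box_le k M (f g : Pt k -> R) : - M <= M -> contR f -> contR g -> (forall x, f x <= g x) ->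
  box_int M f <= box_int M g.
Proof.
move=> HM; elim: k f g => [|k IH] f g Hf Hg Hfg //=.
apply: RInt_le => //; try exact: box_slice_ex.
move=> s _; apply: IH => //; exact: cont_ext_slice.
Qed.

Lemma box_sum_gen k M n (F : 'I_n -> Pt k -> R) (r : seq 'I_n) : (forall i, contR (F i)) ->
  contR (fun x => \big[Rplus/0]_(i <- r) F i x) /\
  box_int M (fun x => \big[Rplus/0]_(i <- r) F i x) = \big[Rplus/0]_(i <- r) box_int M (F i).
Proof.
move=> HF; elim: r => [|i r [IH1 IH2]].
- rewrite big_nil; split.
  + have -> : (fun x : Pt k => \big[Rplus/0]_(i <- [::]) F i x) = (fun _ => 0).
      by apply: functional_extensionality => x; rewrite big_nil.
    exact: contR_const.
  + rewrite (box_ext M (g := fun _ => 0)); first exact: box_zero.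
    by move=> x; rewrite big_nil.
- have E : (fun x : Pt k => \big[Rplus/0]_(j <- i :: r) F j x) =
           (fun x => F i x + \big[Rplus/0]_(j <- r) F j x).
    by apply: functional_extensionality => x; rewrite big_cons.
  rewrite E big_cons; split; first exact: contR_plus.
  rewrite box_plus // IH2 //.
Qed.

Lemma box_sum k M n (F : 'I_n -> Pt k -> R) : (forall i, contR (F i)) ->
  box_int M (fun x => sumR (fun i => F i x)) = sumR (fun i => box_int M (F i)).
Proof. move=> HF; exact: (proj2 (box_sum_gen M (index_enum 'I_n) HF)). Qed.

Lemma contR_sum k n (F : 'I_n -> Pt k -> R) : (forall i, contR (F i)) ->
  contR (fun x => sumR (fun i => F i x)).
Proof. move=> HF; exact: (proj1 (box_sum_gen 0 (index_enum 'I_n) HF)). Qed.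

Definition jcR k (f : R -> Pt k -> R) := forall u y eps, 0 < eps -> exists d, 0 < d /\
  forall u' y', Rabs (u' - u) < d -> near_pt y y' d -> Rabs (f u' y' - f u y) < eps.

Lemma box_contR k M (f : R -> Pt k -> R) : jcR f -> forall u, continuous (fun u => box_int M (f u)) u.
Proof.
move=> Hf u; apply: cont_R => eps e0.
have Hj : jc (fun (z : Pt 1) y => f (z ord0) y).
  move=> z y e e0'. have [d [d0 Hd]] := Hf (z ord0) y e e0'.
  exists d; split => // z' y' hz hy; apply: Hd => //; exact: hz.
have [d [d0 Hd]] := box_cont M Hj (pt1 u) e0.
exists d; split => // u' hu; exact: (Hd (pt1 u')).
Qed.

Definition p2 (u v : R) : Pt 2 := fun j => if j == ord0 then u else v.

Lemma box_cont2 k M (f : R -> R -> Pt k -> R) :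
  (forall u v y eps, 0 < eps -> exists d, 0 < d /\ forall u' v' y', Rabs (u' - u) < d ->
     Rabs (v' - v) < d -> near_pt y y' d -> Rabs (f u' v' y' - f u v y) < eps) ->
  forall u v, continuity_2d_pt (fun u v => box_int M (f u v)) u v.
Proof.
move=> Hf u v eps.
have Hj : jc (fun (z : Pt 2) y => f (z ord0) (z ord_max) y).
  move=> z y e e0'. have [d [d0 Hd]] := Hf (z ord0) (z ord_max) y e e0'.
  exists d; split => // z' y' hz hy; apply: Hd => //; exact: hz.
have [d [d0 Hd]] := box_cont M Hj (p2 u v) (cond_pos eps).
exists (mkposreal d d0) => u' v' hu hv /=.
have := Hd (p2 u' v'). rewrite /p2 /=. apply => j; case: ifP => _ //.
Qed.

Lemma box_deriv k M : forall (f df : R -> Pt k -> R),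
  (forall u y, is_derive (fun u => f u y) u (df u y)) -> jcR f -> jcR df ->
  forall u, is_derive (fun u => box_int M (f u)) u (box_int M (df u)).
Proof.
elim: k => [|k IH] f df Hd Hf Hdf u; first exact: Hd.
pose G := fun u s => box_int M (fun y => f u (ext_pt y s)).
pose DG := fun u s => box_int M (fun y => df u (ext_pt y s)).
have slice : forall (h : R -> Pt k.+1 -> R) s, jcR h -> jcR (fun u y => h u (ext_pt y s)).
  move=> h s Hh u0 y eps e0. have [d [d0 Hd']] := Hh u0 (ext_pt y s) eps e0.
  exists d; split => // u' y' hu hy; apply: Hd' => //; apply/near_ext; split => //.
  rewrite Rminus_diag Rabs_R0 //.
have HG : forall u s, is_derive (fun u => G u s) u (DG u s).
  move=> u0 s; apply: (IH (fun u y => f u (ext_pt y s)) (fun u y => df u (ext_pt y s))); [move=> *; exact: Hd | exact: slice | exact: slice].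
have EDG : forall u s, Derive (fun u => G u s) u = DG u s.
  move=> u0 s; apply: is_derive_unique; exact: HG.
have contf : forall u, contR (f u).
  move=> u0 x eps e0; have [d [d0 H]] := Hf u0 x eps e0.
  exists d; split => // y hy; apply: H => //; rewrite Rminus_diag Rabs_R0 //.
have := (@is_derive_RInt_param G (- M) M u).
rewrite (RInt_ext (fun t => Derive (fun u0 => G u0 t) u) (DG u)); last by move=> *; exact: EDG.
apply.
- exists (mkposreal 1 Rlt_0_1) => y _ t _; exists (DG y t); exact: HG.
- move=> t _.
  have -> : (fun u v => Derive (fun z => G z v) u) = (fun u v => DG u v).
    apply: functional_extensionality => u0; apply: functional_extensionality => v; exact: EDG.
  apply: (@box_cont2 k M (fun u v y => df u (ext_pt y v))).
  move=> u0 v y eps e0. have [d [d0 H]] := Hdf u0 (ext_pt y v) eps e0.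
  exists d; split => // u' v' y' hu hv hy; apply: H => //; apply/near_ext; split => //.
- exists (mkposreal 1 Rlt_0_1) => y _; exact: box_slice_ex.
Qed.

Lemma upd_ext_lift k (y : Pt k) s j t :
  upd (ext_pt y s) (lift ord_max j) t = ext_pt (upd y j t) s.
Proof.
apply: functional_extensionality => j0; rewrite /upd /ext_pt.
case: unliftP => [j1 ->|->].
- by rewrite (inj_eq (@lift_inj _ ord_max)).
- have: (ord_max == lift ord_max j) = false by apply/negbTE; exact: neq_lift.
  by move=> ->.
Qed.

Lemma upd_ext_max k (y : Pt k) s t : upd (ext_pt y s) ord_max t = ext_pt y t.
Proof.
apply: functional_extensionality => j0; rewrite /upd /ext_pt.
case: unliftP => [j1 ->|->]; last by rewrite eqxx.
have: (lift ord_max j1 == ord_max) = false by apply/negbTE; rewrite eq_sym; exact: neq_lift.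
by move=> ->.
Qed.

Lemma upd_same k (x : Pt k) i : upd x i (x i) = x.
Proof. apply: functional_extensionality => j; rewrite /upd; case: eqP => [->|] //. Qed.

Lemma partial_lift k (h : Pt k.+1 -> R) j y s :
  partial (lift ord_max j) h (ext_pt y s) = partial j (fun y => h (ext_pt y s)) y.
Proof.
rewrite /partial ext_lift. apply: Derive_ext => t; by rewrite upd_ext_lift.
Qed.

Lemma partial_max k (h : Pt k.+1 -> R) y s :
  partial ord_max h (ext_pt y s) = Derive (fun t => h (ext_pt y t)) s.
Proof.
rewrite /partial ext_max. apply: Derive_ext => t; by rewrite upd_ext_max.
Qed.

Lemma contR_jcR k (h : Pt k.+1 -> R) : contR h -> jcR (fun u y => h (ext_pt y u)).
Proof.
move=> Hh u y eps e0. have [d [d0 Hd]] := Hh (ext_pt y u) eps e0.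
exists d; split => // u' y' hu hy; apply: Hd; apply/near_ext; split => //.
Qed.

Lemma box_div k M : forall (h : Pt k -> R) (i : 'I_k), contR h ->
  (forall x, ex_derive (fun t => h (upd x i t)) (x i)) -> contR (partial i h) ->
  (forall x, x i = M \/ x i = - M -> h x = 0) -> box_int M (partial i h) = 0.
Proof.
elim: k => [|k IH] h i Hh Hd Hdc Hb; first by exfalso; move: (ltn_ord i); rewrite ltn0.
rewrite box_S.
case: (unliftP ord_max i) => [j ei|ei]; subst i.
- rewrite (RInt_ext _ (fun _ => 0)); first by rewrite RInt_constR; ring.
  move=> s _.
  rewrite (box_ext M (g := partial j (fun y => h (ext_pt y s)))); last by move=> y; exact: partial_lift.
  apply: IH.
  + exact: cont_ext_slice.
  + move=> y. have := Hd (ext_pt y s). rewrite ext_lift.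
    apply: ex_derive_ext => t; by rewrite upd_ext_lift.
  + have -> : partial j (fun y => h (ext_pt y s)) = (fun y => partial (lift ord_max j) h (ext_pt y s)).
      apply: functional_extensionality => y; by rewrite partial_lift.
    exact: cont_ext_slice.
  + move=> y hy; apply: Hb; by rewrite ext_lift.
- pose F := fun u y => h (ext_pt y u).
  pose dF := fun u y => partial ord_max h (ext_pt y u).
  have HdF : forall u y, is_derive (fun u => F u y) u (dF u y).
    move=> u y. rewrite /dF partial_max /F.
    apply: Derive_correct. have := Hd (ext_pt y u). rewrite ext_max.
    apply: ex_derive_ext => t; by rewrite upd_ext_max.
  have HB := box_deriv M HdF (contR_jcR Hh) (contR_jcR Hdc).
  have := is_RInt_derive (fun u => box_int M (F u)) (fun u => box_int M (dF u)) (- M) M.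
  move=> H. have H' := H (fun x _ => HB x) (fun x _ => @box_contR _ M _ (contR_jcR Hdc) x).
  rewrite (is_RInt_unique _ _ _ _ H').
  rewrite /F (box_ext M (f := fun y => h (ext_pt y M)) (g := fun _ => 0)); last first.
    move=> y; apply: Hb; rewrite ext_max; by left.
  rewrite (box_ext M (f := fun y => h (ext_pt y (- M))) (g := fun _ => 0)); last first.
    move=> y; apply: Hb; rewrite ext_max; by right.
  rewrite box_zero /minus /plus /opp /=; ring.
Qed.

Lemma isd_mult (f g : R -> R) x df dg : is_derive f x df -> is_derive g x dg ->
  is_derive (fun t => f t * g t) x (df * g x + f x * dg).
Proof. move=> hf hg; apply: (is_derive_mult f g) => // *; exact: Rmult_comm. Qed.
Lemma isd_plus (f g : R -> R) x df dg : is_derive f x df -> is_derive g x dg ->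
  is_derive (fun t => f t + g t) x (df + dg).
Proof. move=> hf hg; exact: (is_derive_plus f g). Qed.
Lemma isd_const (c x : R) : is_derive (fun _ => c) x 0.
Proof. exact: is_derive_const. Qed.
Lemma isd_rpower (f : R -> R) x df r : 0 < f x -> is_derive f x df ->
  is_derive (fun t => Rpower (f t) r) x (r * Rpower (f x) (r - 1) * df).
Proof.
move=> fx hf. have h := derivable_pt_lim_power _ r fx.
have h' : is_derive (fun y => Rpower y r) (f x) (r * Rpower (f x) (r - 1)) by apply/is_derive_Reals.
have := is_derive_comp _ _ _ _ _ h' hf. rewrite /scal /= /mult /= => H.
by rewrite Rmult_comm.
Qed.
Lemma isd_ext (f g : R -> R) x d : (forall t, f t = g t) -> is_derive f x d -> is_derive g x d.
Proof. move=> H; apply: is_derive_ext => t; exact: H. Qed.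

Definition pd n (i : 'I_n) (f : Pt n -> R) (x : Pt n) (d : R) :=
  is_derive (fun t => f (upd x i t)) (x i) d.

Lemma pd_partial n i (f : Pt n -> R) x d : pd i f x d -> partial i f x = d.
Proof. move=> H; exact: is_derive_unique. Qed.
Lemma pd_ex n i (f : Pt n -> R) x d : pd i f x d -> ex_derive (fun t => f (upd x i t)) (x i).
Proof. move=> H; by exists d. Qed.

Lemma pd_mult n i (f g : Pt n -> R) x df dg : pd i f x df -> pd i g x dg ->
  pd i (fun y => f y * g y) x (df * g x + f x * dg).
Proof. move=> hf hg; have := isd_mult hf hg; by rewrite upd_same. Qed.
Lemma pd_plus n i (f g : Pt n -> R) x df dg : pd i f x df -> pd i g x dg ->
  pd i (fun y => f y + g y) x (df + dg).
Proof. move=> hf hg; exact: isd_plus. Qed.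
Lemma pd_const n i (c : R) (x : Pt n) : pd i (fun _ => c) x 0.
Proof. exact: isd_const. Qed.
Lemma pd_rpower n i (f : Pt n -> R) x df r : 0 < f x -> pd i f x df ->
  pd i (fun y => Rpower (f y) r) x (r * Rpower (f x) (r - 1) * df).
Proof. move=> fx hf; have := @isd_rpower (fun t => f (upd x i t)) (x i) df r; rewrite upd_same; apply => //.
Qed.
Lemma pd_ext n i (f g : Pt n -> R) x d : (forall y, f y = g y) -> pd i f x d -> pd i g x d.
Proof. move=> H; apply: isd_ext => t; exact: H. Qed.
Lemma pd_sum_gen n i m (F : 'I_m -> Pt n -> R) (D : 'I_m -> R) x (r : seq 'I_m) :
  (forall k, pd i (F k) x (D k)) ->
  pd i (fun y => \big[Rplus/0]_(k <- r) F k y) x (\big[Rplus/0]_(k <- r) D k).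
Proof.
move=> H; elim: r => [|k r IH].
- rewrite big_nil; apply: (pd_ext (f := fun _ => 0)); last exact: pd_const.
  by move=> y; rewrite big_nil.
- rewrite big_cons; apply: (pd_ext (f := fun y => F k y + \big[Rplus/0]_(k <- r) F k y)).
    by move=> y; rewrite big_cons.
  exact: pd_plus.
Qed.
Lemma pd_sum n i m (F : 'I_m -> Pt n -> R) (D : 'I_m -> R) x :
  (forall k, pd i (F k) x (D k)) ->
  pd i (fun y => sumR (fun k => F k y)) x (sumR D).
Proof. move=> H; exact: pd_sum_gen. Qed.

Lemma cont_plus n (f g : Pt n -> R) x : cont_at f x -> cont_at g x -> cont_at (fun y => f y + g y) x.
Proof.
move=> Hf Hg eps e0.
have [d1 [d10 H1]] := Hf (eps/2) ltac:(lra). have [d2 [d20 H2]] := Hg (eps/2) ltac:(lra).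
exists (Rmin d1 d2); split; first by apply: Rmin_glb_lt.
move=> y hy. have h1 := H1 y (near_mono (Rmin_l _ _) hy). have h2 := H2 y (near_mono (Rmin_r _ _) hy).
have := Rabs_triang (f y - f x) (g y - g x).
have ->: f y - f x + (g y - g x) = f y + g y - (f x + g x) by ring. lra.
Qed.
Lemma cont_const n (c : R) (x : Pt n) : cont_at (fun _ => c) x.
Proof. move=> eps e0; exists 1; split; [lra|] => y _; rewrite Rminus_diag Rabs_R0 //. Qed.
Lemma cont_mult n (f g : Pt n -> R) x : cont_at f x -> cont_at g x -> cont_at (fun y => f y * g y) x.
Proof.
move=> Hf Hg eps e0.
set S := Rabs (f x) + Rabs (g x) + 1.
have S0 : 1 <= S by rewrite /S; have := Rabs_pos (f x); have := Rabs_pos (g x); lra.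
set e := Rmin 1 (eps / (2 * S)).
have e0' : 0 < e by apply: Rmin_glb_lt; [lra| apply: Rdiv_lt_0_compat; lra].
have e1 : e <= 1 by apply: Rmin_l.
have e2 : e * S <= eps / 2.
  have: e <= eps / (2 * S) by apply: Rmin_r.
  move=> h; have: e * S <= eps / (2 * S) * S by apply: Rmult_le_compat_r; lra.
  have ->: eps / (2 * S) * S = eps / 2 by field; lra. done.
have [d1 [d10 H1]] := Hf e e0'. have [d2 [d20 H2]] := Hg e e0'.
exists (Rmin d1 d2); split; first by apply: Rmin_glb_lt.
move=> y hy. have h1 := H1 y (near_mono (Rmin_l _ _) hy). have h2 := H2 y (near_mono (Rmin_r _ _) hy).
have ->: f y * g y - f x * g x = (f y - f x) * (g y - g x) + (f y - f x) * g x + f x * (g y - g x) by ring.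
have t1 := Rabs_triang ((f y - f x) * (g y - g x) + (f y - f x) * g x) (f x * (g y - g x)).
have t2 := Rabs_triang ((f y - f x) * (g y - g x)) ((f y - f x) * g x).
rewrite !Rabs_mult in t1 t2.
have a1 := Rabs_pos (f y - f x). have a2 := Rabs_pos (g y - g x).
have a3 := Rabs_pos (f x). have a4 := Rabs_pos (g x).
have: Rabs (f y - f x) * Rabs (g y - g x) <= e * e by apply: Rmult_le_compat; lra.
have: Rabs (f y - f x) * Rabs (g x) <= e * Rabs (g x) by apply: Rmult_le_compat_r; lra.
have: Rabs (f x) * Rabs (g y - g x) <= Rabs (f x) * e by apply: Rmult_le_compat_l; lra.
have: e * e <= e * 1 by apply: Rmult_le_compat_l; lra.
rewrite /S in e2. nra.
Qed.

Lemma cont_ext_loc n (f g : Pt n -> R) x : (exists d, 0 < d /\ forall y, near_pt x y d -> f y = g y) ->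
  cont_at f x -> cont_at g x.
Proof.
move=> [d [d0 Hd]] Hf eps e0. have [d' [d0' H]] := Hf eps e0.
exists (Rmin d d'); split; first by apply: Rmin_glb_lt.
move=> y hy. rewrite -Hd; last exact: (near_mono (Rmin_l _ _) hy).
rewrite -Hd; last exact: near_refl. exact: H (near_mono (Rmin_r _ _) hy).
Qed.

Lemma cont_sum n m (F : 'I_m -> Pt n -> R) x : (forall k, cont_at (F k) x) ->
  cont_at (fun y => sumR (fun k => F k y)) x.
Proof.
move=> H; rewrite /sumR; elim: (index_enum _) => [|k r IH].
- apply: (cont_ext_loc (f := fun _ => 0)); last exact: cont_const.
  exists 1; split; [lra|] => y _; by rewrite big_nil.
- apply: (cont_ext_loc (f := fun y => F k y + \big[Rplus/0]_(k <- r) F k y)).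
    exists 1; split; [lra|] => y _; by rewrite big_cons.
  exact: cont_plus.
Qed.

Lemma cont_rpower n (f : Pt n -> R) x r : 0 < f x -> cont_at f x -> cont_at (fun y => Rpower (f y) r) x.
Proof.
move=> fx Hf eps e0.
have hc : continuous (fun y => Rpower y r) (f x).
  apply: ex_derive_continuous. exists (r * Rpower (f x) (r - 1)).
  apply/is_derive_Reals; exact: derivable_pt_lim_power.
have [d1 [d10 H1]] := R_cont hc e0.
have [d2 [d20 H2]] := Hf (Rmin d1 (f x / 2)) ltac:(apply: Rmin_glb_lt; lra).
exists d2; split => // y hy. apply: H1. have := H2 y hy.
have := Rmin_l d1 (f x / 2). lra.
Qed.

Lemma upd_get n (x : Pt n) i a : upd x i a i = a.
Proof. by rewrite /upd eqxx. Qed.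
Lemma upd_other n (x : Pt n) i j a : i != j -> upd x i a j = x j.
Proof. rewrite /upd eq_sym => /negbTE -> //. Qed.
Lemma upd_upd n (x : Pt n) i a b : upd (upd x i a) i b = upd x i b.
Proof. apply: functional_extensionality => j; rewrite /upd; case: (j == i) => //. Qed.
Lemma upd_comm n (x : Pt n) i j a b : i != j -> upd (upd x i a) j b = upd (upd x j b) i a.
Proof.
move=> ij; apply: functional_extensionality => l; rewrite /upd.
case: (eqVneq l j) => [->|lj]; case: (eqVneq l i) => [li|li] //.
all: rewrite ?eqxx ?(negbTE ij) 1?eq_sym ?(negbTE ij) //. all: try (by move: ij; rewrite li eqxx).
Qed.
Lemma near_upd n (x : Pt n) i t d : 0 < d -> Rabs (t - x i) < d -> near_pt x (upd x i t) d.
Proof.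
move=> d0 h j; rewrite /upd; case: eqP => [->|_] //; rewrite Rminus_diag Rabs_R0 //.
Qed.

Section Smooth.
Variable n : nat.
Variable U : Pt n -> Prop.
Variable v : Pt n -> R.
Hypothesis Uo : open_Rn U.
Hypothesis Hv : smooth_on U v.

Lemma sm_cont l x : U x -> cont_at (iter_partial l v) x.
Proof. move=> Ux; exact: (proj1 (Hv l Ux)). Qed.
Lemma sm_pd l i x : U x -> pd i (iter_partial l v) x (iter_partial (i :: l) v x).
Proof.
move=> Ux; have := proj2 (Hv l Ux) i => H.
rewrite /= /partial; exact: Derive_correct.
Qed.

Lemma U_loc x : U x -> exists d, 0 < d /\ forall y, near_pt x y d -> U y.
Proof. move=> Ux; exact: Uo. Qed.

Lemma schwarz l i j x : U x ->
  iter_partial (i :: j :: l) v x = iter_partial (j :: i :: l) v x.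
Proof.
move=> Ux. case: (eqVneq i j) => [->|ij] //.
have [d [d0 Hd]] := U_loc Ux.
set g := iter_partial l v.
pose q u w := upd (upd x i u) j w.
pose f u w := g (q u w).
have qU : forall u w, Rabs (u - x i) < d / 2 -> Rabs (w - x j) < d / 2 -> U (q u w).
  move=> u w hu hw; apply: Hd => k; rewrite /q /upd.
  case: eqP => [->|_]; first lra. case: eqP => [->|_]; first lra.
  rewrite Rminus_diag Rabs_R0; lra.
have qi : forall u w, q u w i = u by move=> u w; rewrite /q upd_other ?upd_get // eq_sym.
have qj : forall u w, q u w j = w by move=> u w; rewrite /q upd_get.
have Ei : forall u w z, f z w = g (upd (q u w) i z).
  move=> u w z; rewrite /f /q (@upd_comm _ (upd x i u) j i w z) 1?eq_sym // upd_upd //.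
have Ej : forall u w z, f u z = g (upd (q u w) j z).
  move=> u w z; rewrite /f /q upd_upd //.
have D1 : forall z w, Derive (fun t => f z t) w = partial j g (q z w).
  move=> z w; rewrite /partial qj; apply: Derive_ext => t; exact: Ej.
have D2 : forall z u, Derive (fun t => f t z) u = partial i g (q u z).
  move=> z u; rewrite /partial qi; apply: Derive_ext => t; exact: Ei.
have DD1 : forall u w, Derive (fun z => Derive (fun t => f z t) w) u = partial i (partial j g) (q u w).
  move=> u w; rewrite /partial qi; apply: Derive_ext => z.
  rewrite D1 /partial. have ->: upd (q u w) i z = q z w.
    by rewrite /q (@upd_comm _ (upd x i u) j i w z) 1?eq_sym // upd_upd.
  done.
have DD2 : forall u w, Derive (fun z => Derive (fun t => f t z) u) w = partial j (partial i g) (q u w).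
  move=> u w; rewrite /partial qj; apply: Derive_ext => z.
  rewrite D2 /partial. have ->: upd (q u w) j z = q u z by rewrite /q upd_upd.
  done.
have qx : q (x i) (x j) = x by rewrite /q !upd_same.
have := @Schwarz f (x i) (x j).
rewrite DD1 DD2 qx => S.
change (partial i (partial j g) x = partial j (partial i g) x).
apply: S.
- exists (mkposreal (d/2) ltac:(lra)) => u w hu hw /=.
  have Uq := qU u w hu hw.
  split; [|split; [|split]].
  + have := pd_ex (sm_pd l i Uq). rewrite qi. apply: ex_derive_ext => z; by rewrite (Ei u).
  + have := pd_ex (sm_pd l j Uq). rewrite qj. apply: ex_derive_ext => z; by rewrite (Ej u w).
  + have := pd_ex (sm_pd (j :: l) i Uq). rewrite qi. apply: ex_derive_ext => z.
    rewrite D1 /=. have ->: upd (q u w) i z = q z w.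
      by rewrite /q (@upd_comm _ (upd x i u) j i w z) 1?eq_sym // upd_upd.
    done.
  + have := pd_ex (sm_pd (i :: l) j Uq). rewrite qj. apply: ex_derive_ext => z.
    rewrite D2 /=. have ->: upd (q u w) j z = q u z by rewrite /q upd_upd.
    done.
- move=> eps. have [e [e0 He]] := sm_cont (i :: j :: l) Ux (cond_pos eps).
  exists (mkposreal e e0) => u w hu hw /=. rewrite !DD1 qx.
  apply: (He (q u w)) => k; rewrite /q /upd.
  case: eqP => [->|_] //. case: eqP => [->|_] //. rewrite Rminus_diag Rabs_R0 //.
- move=> eps. have [e [e0 He]] := sm_cont (j :: i :: l) Ux (cond_pos eps).
  exists (mkposreal e e0) => u w hu hw /=. rewrite !DD2 qx.
  apply: (He (q u w)) => k; rewrite /q /upd.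
  case: eqP => [->|_] //. case: eqP => [->|_] //. rewrite Rminus_diag Rabs_R0 //.
Qed.

Lemma hess_sym x i j : U x -> hess v x i j = hess v x j i.
Proof. move=> Ux; exact: (schwarz [::] i j Ux). Qed.

Lemma third_sym x i j : U x -> iter_partial [:: j; i; i] v x = iter_partial [:: i; i; j] v x.
Proof.
move=> Ux. rewrite (schwarz [:: i] j i Ux).
change (partial i (iter_partial [:: j; i] v) x = partial i (iter_partial [:: i; j] v) x).
rewrite /partial; apply: Derive_ext_loc.
have [d [d0 Hd]] := U_loc Ux.
exists (mkposreal d d0) => t /ballR /= ht.
have Uy : U (upd x i t) by apply: Hd; exact: near_upd.
exact: (schwarz [::] j i Uy).
Qed.
End Smooth.

Section Main.
Variables (n : nat) (r eps : R) (U : Pt n -> Prop) (v phi : Pt n -> R).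
Hypothesis Uo : open_Rn U.
Hypothesis e0 : 0 < eps.
Hypothesis Hv : smooth_on U v.
Hypothesis Hphi : test_fun U phi.

Definition aa y := norm2 (grad v y) + eps.
Definition ww y := Rpower (aa y) r.
Definition FF y := ww y * (phi y * phi y).
Definition h1 (i j : 'I_n) y := hess v y i i * partial j v y * FF y.
Definition h2 (i j : 'I_n) y := hess v y i j * partial j v y * FF y.

Lemma norm2_ge0 (u : 'I_n -> R) : 0 <= norm2 u.
Proof. apply: sumR_ge0 => i; apply: Rle_0_sqr. Qed.

Lemma aa_pos y : 0 < aa y.
Proof. rewrite /aa; have := norm2_ge0 (grad v y); lra. Qed.

Lemma phi_cont l y : cont_at (iter_partial l phi) y.
Proof. exact: (proj1 ((proj1 Hphi) l y I)). Qed.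
Lemma phi_pd l i y : pd i (iter_partial l phi) y (iter_partial (i :: l) phi y).
Proof. have := proj2 ((proj1 Hphi) l y I) i => H. rewrite /= /partial; exact: Derive_correct. Qed.

Definition dA i y := 2 * hess_grad v y i.
Lemma pd_aa i y : U y -> pd i aa y (dA i y).
Proof.
move=> Uy. rewrite /aa /dA.
have H : pd i (fun y => norm2 (grad v y)) y
   (sumR (fun k => hess v y i k * partial k v y + partial k v y * hess v y i k)).
  rewrite /norm2 /grad. apply: pd_sum => k.
  have h := sm_pd Hv [:: k] i Uy. exact: pd_mult.
have := pd_plus H (pd_const i eps y). rewrite Rplus_0_r.
suff -> : sumR (fun k => hess v y i k * partial k v y + partial k v y * hess v y i k) =
          2 * hess_grad v y i by [].
rewrite /hess_grad -sumR_scal; apply: sumR_ext => k; ring.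
Qed.

Definition dW i y := r * Rpower (aa y) (r - 1) * dA i y.
Lemma pd_ww i y : U y -> pd i ww y (dW i y).
Proof. move=> Uy; apply: pd_rpower; [exact: aa_pos | exact: pd_aa]. Qed.

Definition dF i y := dW i y * (phi y * phi y) + ww y * (partial i phi y * phi y + phi y * partial i phi y).
Lemma pd_FF i y : U y -> pd i FF y (dF i y).
Proof.
move=> Uy; apply: pd_mult; first exact: pd_ww.
have h := phi_pd [::] i y. exact: pd_mult.
Qed.

Definition dh1 i j y := (iter_partial [:: j; i; i] v y * partial j v y + hess v y i i * hess v y j j) * FF y
   + hess v y i i * partial j v y * dF j y.
Lemma pd_h1 i j y : U y -> pd j (h1 i j) y (dh1 i j y).
Proof.
move=> Uy; rewrite /h1 /dh1.
apply: (pd_mult (f := fun y => hess v y i i * partial j v y) (g := FF)); last exact: pd_FF.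
apply: (pd_mult (f := fun y => hess v y i i) (g := fun y => partial j v y));
  [exact: (sm_pd Hv [:: i; i] j Uy) | exact: (sm_pd Hv [:: j] j Uy)].
Qed.

Definition dh2 i j y := (iter_partial [:: i; i; j] v y * partial j v y + hess v y i j * hess v y i j) * FF y
   + hess v y i j * partial j v y * dF i y.
Lemma pd_h2 i j y : U y -> pd i (h2 i j) y (dh2 i j y).
Proof.
move=> Uy; rewrite /h2 /dh2.
apply: (pd_mult (f := fun y => hess v y i j * partial j v y) (g := FF)); last exact: pd_FF.
apply: (pd_mult (f := fun y => hess v y i j) (g := fun y => partial j v y));
  [exact: (sm_pd Hv [:: i; j] i Uy) | exact: (sm_pd Hv [:: j] i Uy)].
Qed.

Lemma c_ip l y : U y -> cont_at (iter_partial l v) y.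
Proof. move=> Uy; exact: (sm_cont Hv l Uy). Qed.
Lemma c_hess i j y : U y -> cont_at (fun y => hess v y i j) y.
Proof. move=> Uy; exact: (c_ip [:: i; j] Uy). Qed.
Lemma c_pv j y : U y -> cont_at (fun y => partial j v y) y.
Proof. move=> Uy; exact: (c_ip [:: j] Uy). Qed.
Lemma c_aa y : U y -> cont_at aa y.
Proof.
move=> Uy; apply: cont_plus; last exact: cont_const.
apply: cont_sum => k; apply: cont_mult; exact: c_pv.
Qed.
Lemma c_ww y : U y -> cont_at ww y.
Proof. move=> Uy; apply: cont_rpower; [exact: aa_pos | exact: c_aa]. Qed.
Lemma c_hg i y : U y -> cont_at (fun y => hess_grad v y i) y.
Proof.
move=> Uy; apply: cont_sum => k; apply: cont_mult; [exact: c_hess | exact: c_pv].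
Qed.
Lemma c_FF y : U y -> cont_at FF y.
Proof. move=> Uy; apply: cont_mult; first exact: c_ww. apply: cont_mult; exact: (phi_cont [::]). Qed.
Lemma c_dF i y : U y -> cont_at (dF i) y.
Proof.
move=> Uy; apply: cont_plus; apply: cont_mult.
- apply: cont_mult; [apply: cont_mult; [exact: cont_const|] | apply: cont_mult; [exact: cont_const| exact: c_hg]].
  apply: cont_rpower; [exact: aa_pos| exact: c_aa].
- apply: cont_mult; exact: (phi_cont [::]).
- exact: c_ww.
- apply: cont_plus; apply: cont_mult; try exact: (phi_cont [::]); exact: (phi_cont [:: i]).
Qed.
Lemma c_h1 i j y : U y -> cont_at (h1 i j) y.
Proof. move=> Uy; apply: cont_mult; [apply: cont_mult; [exact: c_hess | exact: c_pv] | exact: c_FF]. Qed.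
Lemma c_h2 i j y : U y -> cont_at (h2 i j) y.
Proof. move=> Uy; apply: cont_mult; [apply: cont_mult; [exact: c_hess | exact: c_pv] | exact: c_FF]. Qed.
Lemma c_dh1 i j y : U y -> cont_at (dh1 i j) y.
Proof.
move=> Uy; apply: cont_plus; apply: cont_mult.
- apply: cont_plus; apply: cont_mult; try exact: c_hess; try exact: c_pv. exact: (c_ip [:: j; i; i] Uy).
- exact: c_FF.
- apply: cont_mult; [exact: c_hess | exact: c_pv].
- exact: c_dF.
Qed.
Lemma c_dh2 i j y : U y -> cont_at (dh2 i j) y.
Proof.
move=> Uy; apply: cont_plus; apply: cont_mult.
- apply: cont_plus; apply: cont_mult; try exact: c_hess; try exact: c_pv. exact: (c_ip [:: i; i; j] Uy).
- exact: c_FF.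
- apply: cont_mult; [exact: c_hess | exact: c_pv].
- exact: c_dF.
Qed.

Definition Zr y := exists d, 0 < d /\ forall z, near_pt y z d -> phi z = 0.

Lemma U_or_Z y : U y \/ Zr y.
Proof.
case: (classic (U y)) => Uy; [by left| right].
have [M0 [d [d0 Hd]]] := proj2 Hphi.
exists d; split => // z hz. apply: NNPP => nz.
apply: Uy; apply: (proj2 (Hd z nz)); exact: near_sym.
Qed.

Lemma Z_open y : Zr y -> exists d, 0 < d /\ forall z, near_pt y z d -> Zr z.
Proof.
move=> [d [d0 Hd]]; exists (d / 2); split; first lra.
move=> z hz; exists (d / 2); split; first lra.
move=> z' hz'; apply: Hd. have := near_trans hz hz'. apply: near_mono; lra.
Qed.

Lemma Z_phi z : Zr z -> phi z = 0.
Proof. move=> [d [d0 Hd]]; apply: Hd; exact: near_refl. Qed.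

Lemma Z_loc (h : Pt n -> R) y : (forall z, Zr z -> h z = 0) -> Zr y ->
  exists d, 0 < d /\ forall z, near_pt y z d -> h z = 0.
Proof.
move=> Hh Zy; have [d [d0 Hd]] := Z_open Zy; exists d; split => // z hz; apply: Hh; exact: Hd.
Qed.

Lemma Z_cont (h : Pt n -> R) y : (forall z, Zr z -> h z = 0) -> Zr y -> cont_at h y.
Proof.
move=> Hh Zy; apply: (cont_ext_loc (f := fun _ => 0)); last exact: cont_const.
have [d [d0 Hd]] := Z_loc Hh Zy; exists d; split => // z hz; rewrite Hd //.
Qed.

Lemma Z_pd (h : Pt n -> R) k y : (forall z, Zr z -> h z = 0) -> Zr y -> pd k h y 0.
Proof.
move=> Hh Zy; have [d [d0 Hd]] := Z_loc Hh Zy.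
rewrite /pd; apply: (is_derive_ext_loc (fun _ => 0)); last exact: isd_const.
exists (mkposreal d d0) => t /ballR /= ht. rewrite Hd //; exact: near_upd.
Qed.

Lemma Z_partial (h : Pt n -> R) k : (forall z, Zr z -> h z = 0) ->
  forall z, Zr z -> partial k h z = 0.
Proof. move=> Hh z Zz; apply: pd_partial; exact: Z_pd. Qed.

Lemma Z_phi_partial k z : Zr z -> partial k phi z = 0.
Proof. apply: Z_partial; exact: Z_phi. Qed.

Lemma gen_good (h dh : Pt n -> R) k : (forall z, Zr z -> h z = 0) ->
  (forall y, U y -> cont_at h y) -> (forall y, U y -> pd k h y (dh y)) ->
  (forall y, U y -> cont_at dh y) ->
  [/\ contR h, (forall x, ex_derive (fun t => h (upd x k t)) (x k)) &
      contR (partial k h)].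
Proof.
move=> Hz Hc Hd Hdc; split.
- move=> y; case: (U_or_Z y) => [Uy|Zy]; [exact: Hc | exact: Z_cont].
- move=> y; case: (U_or_Z y) => [Uy|Zy]; apply: pd_ex; [exact: Hd | exact: Z_pd].
- move=> y; case: (U_or_Z y) => [Uy|Zy].
  + apply: (cont_ext_loc (f := dh)); last exact: Hdc.
    have [d [d0 Hd']] := U_loc Uo Uy. exists d; split => // z hz.
    symmetry; apply: pd_partial; apply: Hd; exact: Hd'.
  + apply: Z_cont => //; exact: Z_partial.
Qed.

Lemma phi_face (M : R) : (forall x, phi x <> 0 -> forall i, Rabs (x i) <= M) ->
  forall x i, x i = M \/ x i = - M -> phi x = 0.
Proof.
move=> HM x i hx; apply: NNPP => nz.
have Mx := HM x nz i.
have H0 : cont_at phi x := phi_cont [::] x.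
have hpos : 0 < Rabs (phi x) by apply: Rabs_pos_lt.
case: (H0 _ hpos) => dd [dd0 Hdd].
have aM : Rabs (x i) >= M by case: hx => ->; [|rewrite Rabs_Ropp]; move: (Rle_abs M); lra.
have [t [ht hbig]] : exists t, Rabs (t - x i) < dd /\ Rabs t > M.
  destruct (Rle_dec 0 (x i)) as [h|h].
  - exists (x i + dd / 2). rewrite (Rabs_right (x i)) in aM; last lra.
    rewrite !Rabs_right; lra.
  - exists (x i - dd / 2). rewrite (Rabs_left (x i)) in aM; last lra.
    rewrite !Rabs_left; lra.
have nz' : phi (upd x i t) <> 0.
  move=> h0. have := Hdd _ (near_upd dd0 ht). rewrite /= h0 Rminus_0_l Rabs_Ropp. lra.
have := HM _ nz' i. rewrite upd_get. lra.
Qed.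

Lemma cont_comp1 (g : R -> R) (f : Pt n -> R) x : continuous g (f x) -> cont_at f x ->
  cont_at (fun y => g (f y)) x.
Proof.
move=> hg Hf eps' e0'.
have [d1 [d10 H1]] := R_cont hg e0'.
case: (Hf _ d10) => d2 [d20 H2].
exists d2; split => // y hy; apply: H1; exact: H2.
Qed.

Lemma cont_inv (f : Pt n -> R) x : f x <> 0 -> cont_at f x -> cont_at (fun y => / f y) x.
Proof.
move=> fx Hf; apply: (cont_comp1 (g := fun z => / z)) => //; exact: continuous_Rinv.
Qed.

Lemma sumR_lin2 (f g : 'I_n -> R) c1 c2 :
  sumR (fun i => c1 * f i + c2 * g i) = c1 * sumR f + c2 * sumR g.
Proof. rewrite sumR_plus !sumR_scal //. Qed.

Lemma Rpower_m1 y : Rpower (aa y) (r - 1) = ww y / aa y.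
Proof.
rewrite /ww /Rminus Rpower_plus Rpower_Ropp Rpower_1 //; exact: aa_pos.
Qed.

Lemma Rpower_p1 y : Rpower (aa y) (r + 1) = ww y * aa y.
Proof. rewrite /ww Rpower_plus Rpower_1 //; exact: aa_pos. Qed.

Variable p : R.
Hypothesis Heq : reg_plap_sol p eps U v.

Definition P0f y := sumR (fun i => partial i v y * hess_grad v y i).

Lemma eqn y : U y -> aa y * laplacian v y = - (p - 2) * P0f y.
Proof.
move=> Uy. have E := Heq Uy.
set q := Rpower (aa y) ((p - 2) / 2 - 1).
have qpos : 0 < q by rewrite /q /Rpower; exact: exp_pos.
have E2 : forall i, partial i (fun y => Rpower (norm2 (grad v y) + eps) ((p - 2) / 2) * partial i v y) y
   = q * ((p - 2) * (partial i v y * hess_grad v y i) + aa y * hess v y i i).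
  move=> i. apply: pd_partial.
  have h := pd_mult (pd_rpower ((p - 2) / 2) (aa_pos y) (pd_aa i Uy)) (sm_pd Hv [:: i] i Uy).
  have -> : q * ((p - 2) * (partial i v y * hess_grad v y i) + aa y * hess v y i i) =
    (p - 2) / 2 * Rpower (aa y) ((p - 2) / 2 - 1) * dA i y * partial i v y +
    Rpower (aa y) ((p - 2) / 2) * iter_partial [:: i; i] v y.
    have -> : Rpower (aa y) ((p - 2) / 2) = q * aa y.
      have e : (p - 2) / 2 = ((p - 2) / 2 - 1) + 1 by ring.
      rewrite {1}e Rpower_plus Rpower_1 //; exact: aa_pos.
    rewrite /dA /hess /= -/q. field.
  exact: h.
rewrite (sumR_ext E2) sumR_scal in E.
rewrite sumR_lin2 in E.
have: (p - 2) * P0f y + aa y * laplacian v y = 0.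
  case: (Rmult_integral _ _ E) => h; first lra.
  exact: h.
lra.
Qed.

Definition DD y := sumR (fun i => sumR (fun j => partial j (h1 i j) y - partial i (h2 i j) y)).
Definition Hf y := dsum (fun i j => hess v y i j * hess v y i j).
Definition X1f y := sumR (fun i => partial i v y * partial i phi y).
Definition X2f y := sumR (fun i => hess_grad v y i * partial i phi y).

Lemma DD_U y : U y -> DD y =
  (laplacian v y ^ 2 - Hf y) * ww y * phi y ^ 2
  + (2 * r) * (ww y / aa y) * phi y ^ 2 * (laplacian v y * P0f y - norm2 (hess_grad v y))
  + 2 * ww y * phi y * (laplacian v y * X1f y - X2f y).
Proof.
move=> Uy.
set L := laplacian v y. set w := ww y. set ph := phi y. set a := aa y.
set cc := r * Rpower a (r - 1) * 2 * (ph * ph).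
have EdF : forall j, dF j y = cc * hess_grad v y j + (2 * w * ph) * partial j phi y.
  move=> j; rewrite /dF /dW /dA /cc -/a -/w -/ph; ring.
have E1 : DD y = dsum (fun i j => hess v y i i * (hess v y j j * FF y)
   + (- FF y) * (hess v y i j * hess v y i j)
   + hess v y i i * (partial j v y * dF j y)
   + (-1) * (dF i y * (hess v y i j * partial j v y))).
  rewrite /DD /dsum; apply: sumR_ext => i; apply: sumR_ext => j.
  rewrite (pd_partial (pd_h1 i j Uy)) (pd_partial (pd_h2 i j Uy)) /dh1 /dh2 (third_sym Uo Hv i j Uy).
  ring.
rewrite E1 !dsum_add !dsum_scal !dsum_sep.
have S1 : sumR (fun j => hess v y j j * FF y) = L * FF y by rewrite sumR_scalr.
have S2 : sumR (fun j => partial j v y * dF j y) = cc * P0f y + (2 * w * ph) * X1f y.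
  rewrite /P0f /X1f -sumR_lin2; apply: sumR_ext => j; rewrite EdF; ring.
have S3 : dsum (fun i j => dF i y * (hess v y i j * partial j v y)) =
    cc * norm2 (hess_grad v y) + (2 * w * ph) * X2f y.
  rewrite /dsum /norm2 /X2f -sumR_lin2; apply: sumR_ext => i.
  rewrite sumR_scal EdF /hess_grad; ring.
rewrite S1 S2 S3 -/L -/(Hf y).
have Ew : Rpower a (r - 1) = w / a by exact: Rpower_m1.
rewrite /cc Ew /FF -/w -/ph. 

have EL : sumR (fun i => hess v y i i) = L by []. rewrite EL. ring.
Qed.

Definition T1 y := norm2 (hess_grad v y) / (norm2 (grad v y) + eps) * ww y * (phi y) ^ 2.
Definition T2 y := (laplacian v y) ^ 2 * ww y * (phi y) ^ 2.
Definition RR y := Rpower (aa y) (r + 1) * norm2 (grad phi y).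

Hypothesis n2 : (2 <= n)%nat.
Let m := INR n - 1.
Let k := p - 2.
Let g := 2 * r.
Hypothesis Hk : -1 < k.
Hypothesis Hg : g * m > - (m + 1).
Hypothesis Hf1 : 0 < f1c m k g.
Let cQ := cQc m k g.

Lemma m1 : 1 <= m.
Proof. rewrite /m. have: INR 2 <= INR n by apply: le_INR; apply/leP. rewrite /=; lra. Qed.

Lemma cQ_pos : 0 < cQ.
Proof. exact: cQc_pos m1 Hk Hg Hf1. Qed.

Lemma Z_T1 z : Zr z -> T1 z = 0.
Proof. move=> Zz; rewrite /T1 (Z_phi Zz); ring. Qed.
Lemma Z_T2 z : Zr z -> T2 z = 0.
Proof. move=> Zz; rewrite /T2 (Z_phi Zz); ring. Qed.
Lemma Z_RR z : Zr z -> RR z = 0.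
Proof.
move=> Zz; rewrite /RR /norm2 /grad.
rewrite (sumR_ext (G := fun _ => 0)); first by rewrite sumR_0; ring.
move=> i; rewrite (Z_phi_partial i Zz); ring.
Qed.
Lemma Z_h1 i j z : Zr z -> h1 i j z = 0.
Proof. move=> Zz; rewrite /h1 /FF (Z_phi Zz); ring. Qed.
Lemma Z_h2 i j z : Zr z -> h2 i j z = 0.
Proof. move=> Zz; rewrite /h2 /FF (Z_phi Zz); ring. Qed.
Lemma Z_DD z : Zr z -> DD z = 0.
Proof.
move=> Zz; rewrite /DD (sumR_ext (G := fun _ => 0)) ?sumR_0 // => i.
rewrite (sumR_ext (G := fun _ => 0)) ?sumR_0 // => j.
rewrite (Z_partial j (@Z_h1 i j) Zz) (Z_partial i (@Z_h2 i j) Zz); ring.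
Qed.

Lemma sq_zero (u : 'I_n -> R) : norm2 u = 0 -> forall i, u i = 0.
Proof.
move=> H i. have := sumR_term_le (F := fun i => u i * u i) i (fun j => Rle_0_sqr (u j)).
rewrite -/(norm2 u) H => h. have := Rle_0_sqr (u i). rewrite /Rsqr => h'.
nra.
Qed.

Lemma pw y : cQ / 2 * (T1 y + T2 y) <= - DD y + 4 / cQ * RR y.
Proof.
case: (U_or_Z y) => [Uy|Zy]; last first.
  rewrite Z_T1 // Z_T2 // Z_DD // Z_RR //; have := cQ_pos; rewrite /Rdiv; nra.
rewrite (DD_U Uy) /T1 /T2 /RR Rpower_p1.
set t := norm2 (grad v y).
have ea : aa y = t + eps by [].
rewrite ea.
have Hsym : forall i j, hess v y i j = hess v y j i by move=> i j; exact: (hess_sym Uo Hv i j Uy).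
apply: (pointwise_main (m := m) (k := k) (g := g)) => //.
- exact: m1.
- exact: norm2_ge0.
- rewrite -ea (eqn Uy) //.
- apply: dsum_ge0 => i j; exact: Rle_0_sqr.
- move=> t0. have g0 := sq_zero t0.
  have hg0 : forall i, hess_grad v y i = 0.
    move=> i; rewrite /hess_grad (sumR_ext (G := fun _ => 0)) ?sumR_0 // => j.
    have := g0 j; rewrite /grad => ->; ring.
  split.
  + rewrite /P0f (sumR_ext (G := fun _ => 0)) ?sumR_0 // => i; rewrite hg0; ring.
  + rewrite /norm2 (sumR_ext (G := fun _ => 0)) ?sumR_0 // => i; rewrite hg0; ring.
- move=> tpos. exact: (mat_ineq Hsym n2 tpos).
- exact: (CS (grad v y) (hess_grad v y)).
- exact: norm2_ge0.
- rewrite /ww /Rpower; exact: exp_pos.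
- exact: norm2_ge0.
- exact: (CS (grad v y) (grad phi y)).
- exact: (CS (hess_grad v y) (grad phi y)).
Qed.

Lemma cont_pow2 (f : Pt n -> R) x : cont_at f x -> cont_at (fun y => f y ^ 2) x.
Proof.
move=> H; have -> : (fun y => f y ^ 2) = (fun y => f y * f y).
  apply: functional_extensionality => y; ring.
exact: cont_mult.
Qed.

Lemma c_norm2hg y : U y -> cont_at (fun y => norm2 (hess_grad v y)) y.
Proof. move=> Uy; apply: cont_sum => i; apply: cont_mult; exact: c_hg. Qed.

Lemma contR_T1 : contR T1.
Proof.
move=> y; case: (U_or_Z y) => [Uy|Zy]; last by apply: Z_cont => //; exact: Z_T1.
apply: cont_mult; last by apply: cont_pow2; exact: (phi_cont [::]).
apply: cont_mult; last exact: c_ww.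
apply: cont_mult; first exact: c_norm2hg.
apply: cont_inv; first exact: (Rgt_not_eq _ _ (aa_pos y)).
exact: c_aa.
Qed.

Lemma contR_T2 : contR T2.
Proof.
move=> y; case: (U_or_Z y) => [Uy|Zy]; last by apply: Z_cont => //; exact: Z_T2.
apply: cont_mult; last by apply: cont_pow2; exact: (phi_cont [::]).
apply: cont_mult; last exact: c_ww.
apply: cont_pow2; apply: cont_sum => i; exact: c_hess.
Qed.

Lemma contR_RR : contR RR.
Proof.
move=> y; case: (U_or_Z y) => [Uy|Zy]; last by apply: Z_cont => //; exact: Z_RR.
apply: cont_mult.
- apply: cont_rpower; [exact: aa_pos | exact: c_aa].
- apply: cont_sum => i; apply: cont_mult; exact: (phi_cont [:: i]).
Qed.

Variable M : R.
Hypothesis HM : forall x, phi x <> 0 -> forall i, Rabs (x i) <= M.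

Lemma good1 i j : [/\ contR (h1 i j), (forall x, ex_derive (fun t => h1 i j (upd x j t)) (x j)) &
      contR (partial j (h1 i j))].
Proof.
apply: (gen_good (dh := dh1 i j)).
- exact: Z_h1.
- move=> y Uy; exact: c_h1.
- move=> y Uy; exact: pd_h1.
- move=> y Uy; exact: c_dh1.
Qed.
Lemma good2 i j : [/\ contR (h2 i j), (forall x, ex_derive (fun t => h2 i j (upd x i t)) (x i)) &
      contR (partial i (h2 i j))].
Proof.
apply: (gen_good (dh := dh2 i j)).
- exact: Z_h2.
- move=> y Uy; exact: c_h2.
- move=> y Uy; exact: pd_h2.
- move=> y Uy; exact: c_dh2.
Qed.

Lemma box_h1 i j : box_int M (partial j (h1 i j)) = 0.
Proof.
have [a b c] := good1 i j. apply: box_div => // x hx.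
rewrite /h1 /FF (phi_face HM hx); ring.
Qed.
Lemma box_h2 i j : box_int M (partial i (h2 i j)) = 0.
Proof.
have [a b c] := good2 i j. apply: box_div => // x hx.
rewrite /h2 /FF (phi_face HM hx); ring.
Qed.

Lemma contR_minus (f g0 : Pt n -> R) : contR f -> contR g0 -> contR (fun x => f x - g0 x).
Proof.
move=> hf hg; apply: contR_plus => //.
have -> : (fun x => - g0 x) = (fun x => -1 * g0 x) by apply: functional_extensionality => x; ring.
exact: contR_scal.
Qed.

Lemma box_minus (f g0 : Pt n -> R) : contR f -> contR g0 ->
  box_int M (fun x => f x - g0 x) = box_int M f - box_int M g0.
Proof.
move=> hf hg. rewrite (box_ext M (g := fun x => f x + (-1) * g0 x)); last by move=> x; ring.
rewrite box_plus //; last exact: contR_scal. rewrite box_scal //; ring.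
Qed.

Lemma contR_inner i : contR (fun y => sumR (fun j => partial j (h1 i j) y - partial i (h2 i j) y)).
Proof.
apply: (contR_sum (F := fun j y => partial j (h1 i j) y - partial i (h2 i j) y)) => j.
have [_ _ c1] := good1 i j. have [_ _ c2] := good2 i j. exact: contR_minus.
Qed.

Lemma contR_DD : contR DD.
Proof. apply: (contR_sum (F := fun i y => sumR (fun j => partial j (h1 i j) y - partial i (h2 i j) y))). exact: contR_inner. Qed.

Lemma box_DD : box_int M DD = 0.
Proof.
rewrite /DD (@box_sum _ M _ (fun i y => sumR (fun j => partial j (h1 i j) y - partial i (h2 i j) y)));
  last exact: contR_inner.
rewrite (sumR_ext (G := fun _ => 0)) ?sumR_0 // => i.
rewrite (@box_sum _ M _ (fun j y => partial j (h1 i j) y - partial i (h2 i j) y)); last first.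
  move=> j; have [_ _ c1] := good1 i j. have [_ _ c2] := good2 i j. exact: contR_minus.
rewrite (sumR_ext (G := fun _ => 0)) ?sumR_0 // => j.
have [_ _ c1] := good1 i j. have [_ _ c2] := good2 i j.
rewrite box_minus // box_h1 box_h2; ring.
Qed.

Lemma final_int : - M <= M ->
  box_int M T1 + box_int M T2 <= 8 / (cQ * cQ) * box_int M RR.
Proof.
move=> hM. have c0 := cQ_pos.
have H' : box_int M (fun y => cQ / 2 * (T1 y + T2 y)) <=
          box_int M (fun y => -1 * DD y + 4 / cQ * RR y).
  apply: box_le => //.
  - apply: contR_scal; exact: contR_plus contR_T1 contR_T2.
  - apply: contR_plus; apply: contR_scal; [exact: contR_DD | exact: contR_RR].
  - move=> y; have := pw y; lra.
have E1 : box_int M (fun y => cQ / 2 * (T1 y + T2 y)) = cQ / 2 * (box_int M T1 + box_int M T2).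
  rewrite (box_scal M (cQ / 2) (contR_plus contR_T1 contR_T2)).
  rewrite (box_plus M contR_T1 contR_T2) //.
have E2 : box_int M (fun y => -1 * DD y + 4 / cQ * RR y) = -1 * box_int M DD + 4 / cQ * box_int M RR.
  rewrite (box_plus M (contR_scal (-1) contR_DD) (contR_scal (4 / cQ) contR_RR)).
  rewrite (box_scal M (-1) contR_DD) (box_scal M (4 / cQ) contR_RR) //.
rewrite E1 E2 box_DD in H'.
have -> : 8 / (cQ * cQ) * box_int M RR = (4 / cQ * box_int M RR) / (cQ / 2) by field; lra.
apply: (Rmult_le_reg_l (cQ / 2)); first lra.
have -> : cQ / 2 * (4 / cQ * box_int M RR / (cQ / 2)) = 4 / cQ * box_int M RR by field; lra.
lra.
Qed.
End Main.

Theorem lemma3p2 (n : nat) (p gamma : R) :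
  (2 <= n)%nat ->
  (1 < p < 2 \/ 2 < p)%R ->
  (gamma < gamma_np n p)%R ->
  exists C : R, (0 <= C)%R /\
    forall (U : Pt n -> Prop) (eps : R) (v phi : Pt n -> R) (M : R),
      open_Rn U -> bounded_Rn U ->
      (0 < eps <= 1)%R ->
      smooth_on U v ->
      reg_plap_sol p eps U v ->
      test_fun U phi ->
      (forall x, phi x <> 0%R -> forall i, (Rabs (x i) <= M)%R) ->
      (box_int M (fun x =>
          norm2 (hess_grad v x) / (norm2 (grad v x) + eps)
          * Rpower (norm2 (grad v x) + eps) ((p - gamma) / 2) * (phi x)^2)
       + box_int M (fun x =>
          (laplacian v x)^2
          * Rpower (norm2 (grad v x) + eps) ((p - gamma) / 2) * (phi x)^2)
       <= C * box_int M (fun x =>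
          Rpower (norm2 (grad v x) + eps) ((p - gamma + 2) / 2)
          * norm2 (grad phi x)))%R.
Proof.
move=> n2 hp hg.
set r := (p - gamma) / 2.
set m := INR n - 1.
have m1 : 1 <= m.
  rewrite /m; have: INR 2 <= INR n by apply: le_INR; apply/leP.
  rewrite /=; lra.
have Hk : -1 < p - 2 by case: hp; lra.
have g1 : gamma < p + INR n / (INR n - 1).
  have := Rmin_l (p + INR n / (INR n - 1)) (3 + (p - 1) / (INR n - 1)). rewrite /gamma_np in hg. lra.
have g2 : gamma < 3 + (p - 1) / (INR n - 1).
  have := Rmin_r (p + INR n / (INR n - 1)) (3 + (p - 1) / (INR n - 1)). rewrite /gamma_np in hg. lra.
have Hg : 2 * r * m > - (m + 1).
  rewrite /r -/m in g1 *. have e : INR n = m + 1 by rewrite /m; ring.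
  rewrite e in g1. have : (m + 1) / m * m = m + 1 by field; lra.
  move=> h. have: (p - gamma) * m > - ((m + 1) / m) * m.
    apply: Rmult_gt_compat_r; lra.
  have ->: 2 * ((p - gamma) / 2) * m = (p - gamma) * m by field.
  lra.
have Hf1 : 0 < f1c m (p - 2) (2 * r).
  rewrite /f1c /r -/m in g2 *. apply: Rmult_lt_0_compat; first lra.
  have ->: 1 - (p - 2) + (1 + (p - 2)) / m + 2 * ((p - gamma) / 2) = 3 + (p - 1) / m - gamma by field; lra.
  lra.
set cQ := cQc m (p - 2) (2 * r).
have c0 : 0 < cQ := cQc_pos m1 Hk Hg Hf1.
exists (8 / (cQ * cQ)); split.
  apply: Rlt_le; apply: Rdiv_lt_0_compat; nra.
move=> U eps v phi M Uo Ub [e0 e1] Hv Heq Hphi HM.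
have ER : box_int M (fun x => Rpower (norm2 (grad v x) + eps) ((p - gamma + 2) / 2) * norm2 (grad phi x))
   = box_int M (RR r eps v phi).
  apply: box_ext => x; rewrite /RR /aa /r.
  have -> : (p - gamma + 2) / 2 = (p - gamma) / 2 + 1 by field. done.
rewrite ER.
have [hM|hM] := Rle_or_lt (- M) M.
- exact: (@final_int n r eps U v phi Uo e0 Hv Hphi p Heq n2 Hk Hg Hf1 M HM hM).
- have ph0 : forall x, phi x = 0.
    move=> x; apply: NNPP => nz. have := HM x nz (Ordinal (leq_trans (isT : (0 < 2)%nat) n2)).
    have := Rabs_pos (x (Ordinal (leq_trans (isT : (0 < 2)%nat) n2))). lra.
  rewrite (box_ext M (g := fun _ => 0)); last by move=> x; rewrite ph0; ring.
  rewrite (box_ext M (f := fun x => _ ^ 2 * _ * _) (g := fun _ => 0)); last by move=> x; rewrite ph0; ring.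
  rewrite (box_ext M (f := RR r eps v phi) (g := fun _ => 0)); last first.
    move=> x; rewrite /RR /norm2 /grad (sumR_ext (G := fun _ => 0)) ?sumR_0; first ring.
    move=> i; rewrite /partial.
    rewrite (Derive_ext _ (fun _ => 0)); last by move=> t; rewrite ph0.
    rewrite Derive_const; ring.
  rewrite box_zero; lra.
Qed.
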